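(* (Local Lipschitz continuity of the observer gain operators.) For every compact interval $[h_-,h_+]\subset(0,\infty)$ and every $M>0$ there exist constants $L_{Q1},L_{Q2}>0$ such that for all $h_1,h_2\in[h_-,h_+]$ and all $f_1,f_2\in C^1(\mathcal T_1)$ with $\|f_i\|_{C^1(\mathcal T_1)}\le M$, and for $i=1,2$, $$\|\mathcal Q_i(h_1,f_1)-\mathcal Q_i(h_2,f_2)\|\le L_{Qi}\max\{|h_1-h_2|,\|f_1-f_2\|\},$$ with sup norms over $[0,1]$ on the left and sup norms on the right.
   Context: Notation: $\mathcal T_1=\{(s,q):0\le s\le q\le 1\}$, $\mathcal T_3=\{(s,q):0\le q\le s\le 1\}$; $\|g\|$ is the sup norm. Observer kernels and gains: given a sensor delay $h>0$ and $f\in C^1(\mathcal T_1)$, let $F,P\in C^0(\mathcal T_1)$ and $M\in C^0(\mathcal T_3)$ be the unique solution of $F_s(s,q)=-F_q(s,q)+\int_s^qf(s,r)F(r,q)dr-f(s,q)$ on $\mathcal T_1$, $F(0,q)=0$; $hM_s(s,q)=M_q(s,q)+h\int_s^1f(s,r)M(r,q)dr$ on $\mathcal T_3$; $hP_s(s,q)=P_q(s,q)+h\int_q^1f(s,r)M(r,q)dr+h\int_s^qf(s,r)P(r,q)dr$ on $\mathcal T_1$; $M(s,s)=P(s,s)$, $P(0,q)=0$, $P(s,1)=hF(s,1)$. The observer gains are $Q_1(s)=-\frac1hM(s,0)$ and $Q_2(s)=-M(1,1-s)$, $s\in[0,1]$, and the observer gain operators are $\mathcal Q_i(h,f):=Q_i$,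 $i=1,2$, mapping into $C^0[0,1]$. *)

(* Defs.v *)
From Stdlib Require Import Reals.
From Coquelicot Require Import Coquelicot.
Open Scope R_scope.

Definition inT1 (s q : R) : Prop := 0 <= s /\ s <= q /\ q <= 1.
Definition inT3 (s q : R) : Prop := 0 <= q /\ q <= s /\ s <= 1.

Definition cont_on (D : R -> R -> Prop) (g : R -> R -> R) : Prop :=
  forall s q, D s q ->
    forall eps : R, 0 < eps -> exists delta : R, 0 < delta /\
      forall s' q', D s' q' -> Rabs (s' - s) < delta -> Rabs (q' - q) < delta ->
        Rabs (g s' q' - g s q) < eps.

(* f in C^1(T1): f continuous on T1, its partial derivatives exist in the
   interior of T1 and extend to continuous functions fs, fq on T1. *)
Definition C1_T1 (f fs fq : R -> R -> R) : Prop :=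
  cont_on inT1 f /\ cont_on inT1 fs /\ cont_on inT1 fq /\
  (forall s q, 0 < s -> s < q -> q < 1 ->
     is_derive (fun x => f x q) s (fs s q) /\
     is_derive (fun y => f s y) q (fq s q)).

Definition sup_T1 (g : R -> R -> R) : R :=
  real (Lub_Rbar (fun y => exists s q, inT1 s q /\ y = Rabs (g s q))).
Definition sup_01 (g : R -> R) : R :=
  real (Lub_Rbar (fun y => exists s, 0 <= s <= 1 /\ y = Rabs (g s))).

Definition C1_norm_T1 (f fs fq : R -> R -> R) : R :=
  Rmax (sup_T1 f) (Rmax (sup_T1 fs) (sup_T1 fq)).

(* (F, M, P) solves the observer kernel equations for delay h and f.
   F_s + F_q, h M_s - M_q, h P_s - P_q are the derivatives along the
   characteristics t |-> (s+t, q+t) and t |-> (s + h t, q - t). *)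
Definition kernel_sol (h : R) (f F M P : R -> R -> R) : Prop :=
  cont_on inT1 F /\ cont_on inT3 M /\ cont_on inT1 P /\
  (forall s q, 0 < s -> s < q -> q < 1 ->
     is_derive (fun t => F (s + t) (q + t)) 0
       (RInt (fun r => f s r * F r q) s q - f s q)) /\
  (forall q, 0 <= q <= 1 -> F 0 q = 0) /\
  (forall s q, 0 < q -> q < s -> s < 1 ->
     is_derive (fun t => M (s + h * t) (q - t)) 0
       (h * RInt (fun r => f s r * M r q) s 1)) /\
  (forall s q, 0 < s -> s < q -> q < 1 ->
     is_derive (fun t => P (s + h * t) (q - t)) 0
       (h * RInt (fun r => f s r * M r q) q 1
        + h * RInt (fun r => f s r * P r q) s q)) /\
  (forall s, 0 <= s <= 1 -> M s s = P s s) /\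
  (forall q, 0 <= q <= 1 -> P 0 q = 0) /\
  (forall s, 0 <= s <= 1 -> P s 1 = h * F s 1).

Definition gain_Q1 (h : R) (M : R -> R -> R) : R -> R := fun s => - (1 / h) * M s 0.
Definition gain_Q2 (M : R -> R -> R) : R -> R := fun s => - M 1 (1 - s).

(* Main.v *)
Require Import Defs.
From Stdlib Require Import Reals.
From Coquelicot Require Import Coquelicot.
From Stdlib Require Import Lra Psatz ClassicalEpsilon Classical.
Open Scope R_scope.


Definition clamp (a b x : R) : R := Rmax a (Rmin b x).

Lemma clamp_in a b x : a <= b -> a <= clamp a b x <= b.
Proof. intros; unfold clamp, Rmax, Rmin; repeat destruct Rle_dec; lra. Qed.

Lemma clamp_id a b x : a <= x <= b -> clamp a b x = x.
Proof. intros; unfold clamp, Rmax, Rmin; repeat destruct Rle_dec; lra. Qed.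

Lemma clamp_lip a b x y : a <= b -> Rabs (clamp a b x - clamp a b y) <= Rabs (x - y).
Proof. intros; unfold clamp, Rmax, Rmin; repeat destruct Rle_dec;
  unfold Rabs; repeat destruct Rcase_abs; lra. Qed.

Definition cont_rel (g : R -> R) (a b : R) : Prop :=
  forall x, a <= x <= b -> forall eps, 0 < eps -> exists delta, 0 < delta /\
    forall y, a <= y <= b -> Rabs (y - x) < delta -> Rabs (g y - g x) < eps.

Lemma clamp_cont g a b : a <= b -> cont_rel g a b ->
  forall x, continuity_pt (fun y => g (clamp a b y)) x.
Proof.
  intros Hab Hg x. apply continuity_pt_locally. intros eps.
  destruct (Hg (clamp a b x) (clamp_in a b x Hab) eps (cond_pos eps)) as [d [Hd H]].
  exists (mkposreal d Hd). intros u Hu. apply H. apply clamp_in; auto.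
  eapply Rle_lt_trans. apply clamp_lip; auto. exact Hu.
Qed.

Lemma cont_rel_sub g a b c d : a <= c -> d <= b -> cont_rel g a b -> cont_rel g c d.
Proof.
  intros H1 H2 Hg x Hx eps He. destruct (Hg x ltac:(lra) eps He) as [del [Hd H]].
  exists del; split; auto. intros y Hy. apply H; lra.
Qed.

Lemma cmp0 (g dg Phi dPhi : R -> R) a b : a <= b -> cont_rel g a b ->
  (forall t, is_derive Phi t (dPhi t)) ->
  (forall t, a < t < b -> is_derive g t (dg t) /\ Rabs (dg t) <= dPhi t) ->
  Rabs (g b - g a) <= Phi b - Phi a.
Proof.
  intros Hab Hg HPhi Hd.
  destruct (Req_dec a b) as [E|Hne].
  { subst. replace (g b - g b) with 0 by ring. rewrite Rabs_R0. lra. }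
  assert (Hlt : a < b) by lra.
  set (G := fun y => g (clamp a b y)).
  assert (HG : forall x, continuity_pt G x) by (apply clamp_cont; auto).
  assert (HPc : forall x, continuity_pt Phi x).
  { intros x. apply continuity_pt_filterlim. apply (ex_derive_continuous Phi x).
    exists (dPhi x). apply HPhi. }
  assert (HGd : forall t, a < t < b -> is_derive G t (dg t)).
  { intros t Ht. apply (is_derive_ext_loc g). 
    exists (mkposreal (Rmin (t - a) (b - t)) ltac:(apply Rmin_pos; lra)).
    intros y Hy. unfold G. rewrite clamp_id; auto. cbn in Hy.
    unfold ball in Hy; cbn in Hy; unfold AbsRing_ball, abs, minus, plus, opp in Hy; cbn in Hy.
    unfold Rmin in Hy; destruct Rle_dec; apply Rabs_def2 in Hy; lra.
    apply Hd; auto. }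
  set (df1 := fun t => if Rlt_dec a t then if Rlt_dec t b then dg t - dPhi t else 0 else 0).
  set (df2 := fun t => if Rlt_dec a t then if Rlt_dec t b then - dg t - dPhi t else 0 else 0).
  assert (Hb : G b = g b) by (unfold G; rewrite clamp_id; lra).
  assert (Ha : G a = g a) by (unfold G; rewrite clamp_id; lra).
  destruct (MVT_gen (fun t => G t - Phi t) a b df1) as [c1 [Hc1 E1]].
  { intros x Hx. rewrite Rmin_left in Hx by lra. rewrite Rmax_right in Hx by lra.
    unfold df1. destruct Rlt_dec; [|lra]. destruct Rlt_dec; [|lra].
    apply (is_derive_minus G Phi). apply HGd; lra. apply HPhi. }
  { intros x _. apply continuity_pt_minus; auto. }
  destruct (MVT_gen (fun t => - G t - Phi t) a b df2) as [c2 [Hc2 E2]].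
  { intros x Hx. rewrite Rmin_left in Hx by lra. rewrite Rmax_right in Hx by lra.
    unfold df2. destruct Rlt_dec; [|lra]. destruct Rlt_dec; [|lra].
    apply (is_derive_minus (fun t => - G t) Phi). 
    apply (is_derive_opp G). apply HGd; lra. apply HPhi. }
  { intros x _. apply continuity_pt_minus; auto. apply continuity_pt_opp; auto. }
  assert (D1 : df1 c1 <= 0).
  { unfold df1. destruct Rlt_dec; [|lra]. destruct Rlt_dec; [|lra].
    destruct (Hd c1 ltac:(lra)) as [_ H].
    unfold Rabs in H; destruct Rcase_abs; lra. }
  assert (D2 : df2 c2 <= 0).
  { unfold df2. destruct Rlt_dec; [|lra]. destruct Rlt_dec; [|lra].
    destruct (Hd c2 ltac:(lra)) as [_ H]. 
    unfold Rabs in H; destruct Rcase_abs; lra. }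
  rewrite Hb, Ha in E1, E2.
  assert (df1 c1 * (b - a) <= 0) by (apply Rmult_le_0_r; lra).
  assert (df2 c2 * (b - a) <= 0) by (apply Rmult_le_0_r; lra).
  unfold Rabs; destruct Rcase_abs; lra.
Qed.

Lemma cmp1 (g dg Phi dPhi : R -> R) a b p : a <= b -> cont_rel g a b ->
  (forall t, is_derive Phi t (dPhi t)) ->
  (forall t, a < t < b -> t <> p -> is_derive g t (dg t) /\ Rabs (dg t) <= dPhi t) ->
  Rabs (g b - g a) <= Phi b - Phi a.
Proof.
  intros Hab Hg HP Hd.
  destruct (Rlt_dec a p) as [H1|H1]; [destruct (Rlt_dec p b) as [H2|H2]|].
  - assert (A1 := cmp0 g dg Phi dPhi a p ltac:(lra) (cont_rel_sub g a b a p ltac:(lra) ltac:(lra) Hg) HP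
      ltac:(intros t Ht; apply Hd; [lra| intros ->; lra])).
    assert (A2 := cmp0 g dg Phi dPhi p b ltac:(lra) (cont_rel_sub g a b p b ltac:(lra) ltac:(lra) Hg) HP
      ltac:(intros t Ht; apply Hd; [lra| intros ->; lra])).
    replace (g b - g a) with ((g b - g p) + (g p - g a)) by ring.
    eapply Rle_trans. apply Rabs_triang. lra.
  - apply (cmp0 g dg Phi dPhi); auto. intros t Ht; apply Hd; [lra| intros ->; lra].
  - apply (cmp0 g dg Phi dPhi); auto. intros t Ht; apply Hd; [lra| intros ->; lra].
Qed.

Lemma cmp2 (g dg Phi dPhi : R -> R) a b p1 p2 : a <= b -> cont_rel g a b ->
  (forall t, is_derive Phi t (dPhi t)) ->
  (forall t, a < t < b -> t <> p1 -> t <> p2 -> is_derive g t (dg t) /\ Rabs (dg t) <= dPhi t) ->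
  Rabs (g b - g a) <= Phi b - Phi a.
Proof.
  intros Hab Hg HP Hd.
  destruct (Rlt_dec a p1) as [H1|H1]; [destruct (Rlt_dec p1 b) as [H2|H2]|].
  - assert (A1 := cmp1 g dg Phi dPhi a p1 p2 ltac:(lra) (cont_rel_sub g a b a p1 ltac:(lra) ltac:(lra) Hg) HP
      ltac:(intros t Ht Ht2; apply Hd; [lra| intros ->; lra|auto])).
    assert (A2 := cmp1 g dg Phi dPhi p1 b p2 ltac:(lra) (cont_rel_sub g a b p1 b ltac:(lra) ltac:(lra) Hg) HP
      ltac:(intros t Ht Ht2; apply Hd; [lra| intros ->; lra|auto])).
    replace (g b - g a) with ((g b - g p1) + (g p1 - g a)) by ring.
    eapply Rle_trans. apply Rabs_triang. lra.
  - apply (cmp1 g dg Phi dPhi a b p2); auto. intros t Ht Ht2; apply Hd; [lra| intros ->; lra|auto].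
  - apply (cmp1 g dg Phi dPhi a b p2); auto. intros t Ht Ht2; apply Hd; [lra| intros ->; lra|auto].
Qed.

Definition lbound (g : R -> R -> R) (l : list (Compactness.Tn 2 R)) : R :=
  List.fold_right (fun t acc => Rmax (Rabs (g (fst t) (fst (snd t))) + 1) acc) 0 l.

Lemma lbound_in g l t : List.In t l -> Rabs (g (fst t) (fst (snd t))) + 1 <= lbound g l.
Proof.
  induction l as [|a l IH]; simpl; [tauto|]. intros [->|H].
  - apply Rmax_l.
  - eapply Rle_trans. apply IH; auto. apply Rmax_r.
Qed.

Lemma bounded_sq (D : R -> R -> Prop) g :
  (forall x y, D x y -> 0 <= x <= 1 /\ 0 <= y <= 1) ->
  (forall x y, ~ D x y -> exists d, 0 < d /\ forall x' y', Rabs (x' - x) < d -> Rabs (y' - y) < d -> ~ D x' y') ->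
  cont_on D g -> exists B, forall x y, D x y -> Rabs (g x y) <= B.
Proof.
  intros Hsq Hcl Hc.
  set (P := fun x y (d : posreal) =>
    (D x y -> forall x' y', D x' y' -> Rabs (x' - x) < d -> Rabs (y' - y) < d -> Rabs (g x' y' - g x y) < 1) /\
    (~ D x y -> forall x' y', Rabs (x' - x) < d -> Rabs (y' - y) < d -> ~ D x' y')).
  assert (Hex : forall x y, exists d, P x y d).
  { intros x y. destruct (classic (D x y)) as [HD|HD].
    - destruct (Hc x y HD 1 Rlt_0_1) as [d [Hd H]]. exists (mkposreal d Hd).
      split; [intros _ x' y' HD' H1 H2; apply H; auto | tauto].
    - destruct (Hcl x y HD) as [d [Hd H]]. exists (mkposreal d Hd).
      split; [tauto| intros _ x' y'; apply H]. }
  set (inh := inhabits (mkposreal 1 Rlt_0_1)).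
  set (delta := fun t : Compactness.Tn 2 R => epsilon inh (P (fst t) (fst (snd t)))).
  assert (Hdel : forall t, P (fst t) (fst (snd t)) (delta t)).
  { intros t. unfold delta. apply epsilon_spec. apply Hex. }
  assert (Hcomp := compactness_list 2 (0,(0,tt)) (1,(1,tt)) delta).
  apply NNPP. intros HN. apply Hcomp. intros [l Hl]. apply HN.
  exists (lbound g l). intros x y HD.
  destruct (Hl (x,(y,tt))) as [t [Hin [Hb Hclose]]].
  { simpl. destruct (Hsq x y HD). tauto. }
  destruct t as [t1 [t2 []]]. simpl in Hclose. destruct Hclose as [C1 [C2 _]].
  assert (Ht := lbound_in g l _ Hin). simpl in Ht.
  destruct (Hdel (t1,(t2,tt))) as [Q1 Q2]. simpl in Q1, Q2.
  destruct (classic (D t1 t2)) as [HDt|HDt].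
  - assert (H := Q1 HDt x y HD C1 C2).
    assert (Rabs (g x y) <= Rabs (g t1 t2) + 1).
    { replace (g x y) with ((g x y - g t1 t2) + g t1 t2) by ring.
      eapply Rle_trans. apply Rabs_triang. lra. }
    lra.
  - exfalso. exact (Q2 HDt x y C1 C2 HD).
Qed.

Lemma lub_finite (E : R -> Prop) y0 B : E y0 -> (forall y, E y -> y <= B) ->
  (forall y, E y -> y <= real (Lub_Rbar E)) /\ real (Lub_Rbar E) <= B.
Proof.
  intros H0 HB. destruct (Lub_Rbar_correct E) as [Hub Hlub].
  assert (L1 : Rbar_le (Lub_Rbar E) (Finite B)) by (apply Hlub; intros y Hy; apply HB; auto).
  assert (L2 : Rbar_le (Finite y0) (Lub_Rbar E)) by (apply Hub; auto).
  destruct (Lub_Rbar E) as [l| |]; simpl in *; try tauto.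
  all: try (split; auto; intros y Hy; specialize (Hub y Hy); simpl in Hub; auto).
Qed.

Lemma sup_T1_ge g x y : (exists B, forall s q, inT1 s q -> Rabs (g s q) <= B) -> inT1 x y ->
  Rabs (g x y) <= sup_T1 g.
Proof.
  intros [B HB] Hxy. unfold sup_T1.
  destruct (lub_finite (fun z => exists s q, inT1 s q /\ z = Rabs (g s q)) (Rabs (g x y)) B) as [H1 _].
  - exists x, y; auto.
  - intros z [s [q [Hs ->]]]. auto.
  - apply H1. exists x, y; auto.
Qed.

Lemma sup_T1_le g B : (forall s q, inT1 s q -> Rabs (g s q) <= B) -> sup_T1 g <= B.
Proof.
  intros HB. unfold sup_T1.
  destruct (lub_finite (fun z => exists s q, inT1 s q /\ z = Rabs (g s q)) (Rabs (g 0 0)) B) as [_ H2]; auto.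
  - exists 0, 0; split; auto. unfold inT1; lra.
  - intros z [s [q [Hs ->]]]. auto.
Qed.

Lemma sup_01_le g B : (forall s, 0 <= s <= 1 -> Rabs (g s) <= B) -> sup_01 g <= B.
Proof.
  intros HB. unfold sup_01.
  destruct (lub_finite (fun z => exists s, 0 <= s <= 1 /\ z = Rabs (g s)) (Rabs (g 0)) B) as [_ H2]; auto.
  - exists 0; split; auto. lra.
  - intros z [s [Hs ->]]. auto.
Qed.

Lemma gron (D : R -> R -> Prop) (phi : R -> R -> R) E :
  (exists B, forall x y, D x y -> phi x y <= B) ->
  (forall V, (forall x y, D x y -> phi x y <= V) -> forall x y, D x y -> phi x y <= V / 2 + E) ->
  forall x y, D x y -> phi x y <= 2 * E.
Proof.
  intros [B HB] Hstep x y Hxy.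
  set (S := fun z => exists s q, D s q /\ z = phi s q).
  destruct (lub_finite S (phi x y) B) as [H1 H2].
  - exists x, y; auto.
  - intros z [s [q [Hs ->]]]. auto.
  set (L := real (Lub_Rbar S)) in *.
  assert (HL : forall s q, D s q -> phi s q <= L) by (intros s q Hs; apply H1; exists s, q; auto).
  assert (H3 := Hstep L HL).
  assert (L <= L / 2 + E).
  { destruct (Lub_Rbar_correct S) as [_ Hlub].
    assert (Rbar_le (Lub_Rbar S) (Finite (L/2 + E))).
    { apply Hlub. intros z [s [q [Hs ->]]]. simpl. apply H3; auto. }
    assert (L2 : Rbar_le (Finite (phi x y)) (Lub_Rbar S)) by (destruct (Lub_Rbar_correct S) as [Hub _]; apply Hub; exists x, y; auto).
    unfold L. destruct (Lub_Rbar S); simpl in *; tauto. }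
  specialize (HL x y Hxy). lra.
Qed.


Lemma cont_rel_mult g1 g2 a b : cont_rel g1 a b -> cont_rel g2 a b -> cont_rel (fun x => g1 x * g2 x) a b.
Proof.
  intros H1 H2 x Hx eps He.
  set (m1 := Rabs (g1 x) + 1). set (m2 := Rabs (g2 x) + 1).
  assert (Hm1 : 0 < m1) by (unfold m1; pose proof (Rabs_pos (g1 x)); lra).
  assert (Hm2 : 0 < m2) by (unfold m2; pose proof (Rabs_pos (g2 x)); lra).
  set (e := Rmin 1 (eps / (2 * (m1 + m2)))).
  assert (He0 : 0 < e) by (unfold e; apply Rmin_pos; [lra| apply Rdiv_lt_0_compat; lra]).
  destruct (H1 x Hx e He0) as [d1 [Hd1 K1]]. destruct (H2 x Hx e He0) as [d2 [Hd2 K2]].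
  exists (Rmin d1 d2); split; [apply Rmin_pos; auto|]. intros y Hy Hyx.
  assert (A1 := K1 y Hy ltac:(eapply Rlt_le_trans; [exact Hyx| apply Rmin_l])).
  assert (A2 := K2 y Hy ltac:(eapply Rlt_le_trans; [exact Hyx| apply Rmin_r])).
  replace (g1 y * g2 y - g1 x * g2 x) with ((g1 y - g1 x) * g2 y + g1 x * (g2 y - g2 x)) by ring.
  assert (Hg2 : Rabs (g2 y) <= m2).
  { unfold m2. replace (g2 y) with ((g2 y - g2 x) + g2 x) by ring.
    eapply Rle_trans. apply Rabs_triang. assert (e <= 1) by apply Rmin_l. lra. }
  assert (He2 : e * (m1 + m2) <= eps / 2).
  { assert (e <= eps / (2 * (m1 + m2))) by apply Rmin_r.
    apply Rmult_le_compat_r with (r := m1 + m2) in H; [|lra].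
    replace (eps / (2 * (m1 + m2)) * (m1 + m2)) with (eps / 2) in H by (field; lra). lra. }
  eapply Rle_lt_trans. apply Rabs_triang. rewrite !Rabs_mult.
  assert (Rabs (g1 y - g1 x) * Rabs (g2 y) <= e * m2)
    by (apply Rmult_le_compat; auto using Rabs_pos; lra).
  assert (Rabs (g1 x) * Rabs (g2 y - g2 x) <= m1 * e)
    by (apply Rmult_le_compat; auto using Rabs_pos; unfold m1; lra).
  nra.
Qed.

Lemma cont_rel_minus g1 g2 a b : cont_rel g1 a b -> cont_rel g2 a b -> cont_rel (fun x => g1 x - g2 x) a b.
Proof.
  intros H1 H2 x Hx eps He.
  destruct (H1 x Hx (eps/2) ltac:(lra)) as [d1 [Hd1 K1]]. destruct (H2 x Hx (eps/2) ltac:(lra)) as [d2 [Hd2 K2]].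
  exists (Rmin d1 d2); split; [apply Rmin_pos; auto|]. intros y Hy Hyx.
  assert (A1 := K1 y Hy ltac:(eapply Rlt_le_trans; [exact Hyx| apply Rmin_l])).
  assert (A2 := K2 y Hy ltac:(eapply Rlt_le_trans; [exact Hyx| apply Rmin_r])).
  replace (g1 y - g2 y - (g1 x - g2 x)) with ((g1 y - g1 x) - (g2 y - g2 x)) by ring.
  eapply Rle_lt_trans. apply Rabs_triang. rewrite Rabs_Ropp. lra.
Qed.

Lemma cont_rel_ex_RInt g a b : a <= b -> cont_rel g a b -> ex_RInt g a b.
Proof.
  intros Hab Hg. apply (ex_RInt_ext (fun y => g (clamp a b y))).
  - intros x Hx. rewrite Rmin_left in Hx by lra. rewrite Rmax_right in Hx by lra.
    rewrite clamp_id; auto; lra.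
  - apply (ex_RInt_continuous (V := R_CompleteNormedModule)). intros z _. apply continuity_pt_filterlim. apply clamp_cont; auto.
Qed.

Lemma abs_RInt_le_open g a b M : a <= b -> 0 <= M -> ex_RInt g a b ->
  (forall t, a < t < b -> Rabs (g t) <= M) -> Rabs (RInt g a b) <= (b - a) * M.
Proof.
  intros Hab HM Hex Hb.
  set (g' := fun t => if Rlt_dec a t then if Rlt_dec t b then g t else 0 else 0).
  assert (E : forall x, Rmin a b < x < Rmax a b -> g x = g' x).
  { intros x Hx. rewrite Rmin_left in Hx by lra. rewrite Rmax_right in Hx by lra.
    unfold g'. destruct Rlt_dec; [|lra]. destruct Rlt_dec; [|lra]. auto. }
  rewrite (RInt_ext _ _ _ _ E). apply abs_RInt_le_const; auto.
  - apply (ex_RInt_ext g); auto.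
  - intros t Ht. unfold g'. destruct Rlt_dec; [destruct Rlt_dec|]; try (rewrite Rabs_R0; lra).
    apply Hb; lra.
Qed.

Lemma RInt_minus' g1 g2 a b : ex_RInt g1 a b -> ex_RInt g2 a b ->
  RInt (fun x => g1 x - g2 x) a b = RInt g1 a b - RInt g2 a b.
Proof. intros H1 H2. exact (RInt_minus g1 g2 a b H1 H2). Qed.

Lemma ex_RInt_minus' g1 g2 a b : ex_RInt g1 a b -> ex_RInt g2 a b ->
  ex_RInt (fun x => g1 x - g2 x) a b.
Proof. intros H1 H2. exact (ex_RInt_minus (V := R_NormedModule) g1 g2 a b H1 H2). Qed.

Lemma ex_RInt_sub1 (g : R -> R) a b c : a <= b <= c -> ex_RInt g a c -> ex_RInt g a b.
Proof. intros. exact (ex_RInt_Chasles_1 (V := R_CompleteNormedModule) g a b c H H0). Qed.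
Lemma ex_RInt_sub2 (g : R -> R) a b c : a <= b <= c -> ex_RInt g a c -> ex_RInt g b c.
Proof. intros. exact (ex_RInt_Chasles_2 (V := R_CompleteNormedModule) g a b c H H0). Qed.

Lemma RInt_Chasles' g a b c : ex_RInt g a b -> ex_RInt g b c -> RInt g a b + RInt g b c = RInt g a c.
Proof. intros H1 H2. exact (RInt_Chasles g a b c H1 H2). Qed.

Lemma cont_on_row (D : R -> R -> Prop) g q a b : cont_on D g -> (forall r, a <= r <= b -> D r q) ->
  cont_rel (fun r => g r q) a b.
Proof.
  intros Hg HD x Hx eps He. destruct (Hg x q (HD x Hx) eps He) as [d [Hd H]].
  exists d; split; auto. intros y Hy Hyx. apply H; auto. rewrite Rminus_diag, Rabs_R0; auto.
Qed.

Lemma cont_on_col (D : R -> R -> Prop) g s a b : cont_on D g -> (forall r, a <= r <= b -> D s r) ->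
  cont_rel (fun r => g s r) a b.
Proof.
  intros Hg HD x Hx eps He. destruct (Hg s x (HD x Hx) eps He) as [d [Hd H]].
  exists d; split; auto. intros y Hy Hyx. apply H; auto. rewrite Rminus_diag, Rabs_R0; auto.
Qed.

Lemma T1_closed x y : ~ inT1 x y -> exists d, 0 < d /\ forall x' y', Rabs (x' - x) < d -> Rabs (y' - y) < d -> ~ inT1 x' y'.
Proof.
  intros H. unfold inT1 in *.
  destruct (Rlt_dec x 0) as [H1|H1].
  { exists (-x); split; [lra|]. intros x' y' A B [C _]. apply Rabs_def2 in A. lra. }
  destruct (Rlt_dec y x) as [H2|H2].
  { exists ((x - y)/2); split; [lra|]. intros x' y' A B [_ [C _]]. apply Rabs_def2 in A. apply Rabs_def2 in B. lra. }
  destruct (Rlt_dec 1 y) as [H3|H3].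
  { exists (y - 1); split; [lra|]. intros x' y' A B [_ [_ C]]. apply Rabs_def2 in B. lra. }
  exfalso. apply H. lra.
Qed.

Lemma T1_bounded g : cont_on inT1 g -> exists B, forall s q, inT1 s q -> Rabs (g s q) <= B.
Proof.
  intros Hg. apply bounded_sq; [unfold inT1; intros; lra | apply T1_closed | auto].
Qed.

Definition inSq (s q : R) : Prop := 0 <= s <= 1 /\ 0 <= q <= 1.

Lemma Sq_closed x y : ~ inSq x y -> exists d, 0 < d /\ forall x' y', Rabs (x' - x) < d -> Rabs (y' - y) < d -> ~ inSq x' y'.
Proof.
  intros H. unfold inSq in *.
  destruct (Rlt_dec x 0) as [H1|H1].
  { exists (-x); split; [lra|]. intros x' y' A B [C _]. apply Rabs_def2 in A. lra. }
  destruct (Rlt_dec 1 x) as [H2|H2].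
  { exists (x - 1); split; [lra|]. intros x' y' A B [C _]. apply Rabs_def2 in A. lra. }
  destruct (Rlt_dec y 0) as [H3|H3].
  { exists (-y); split; [lra|]. intros x' y' A B [_ C]. apply Rabs_def2 in B. lra. }
  destruct (Rlt_dec 1 y) as [H4|H4].
  { exists (y - 1); split; [lra|]. intros x' y' A B [_ C]. apply Rabs_def2 in B. lra. }
  exfalso. apply H. lra.
Qed.

Lemma Sq_bounded g : cont_on inSq g -> exists B, forall s q, inSq s q -> Rabs (g s q) <= B.
Proof.
  intros Hg. apply bounded_sq; [unfold inSq; intros; lra | apply Sq_closed | auto].
Qed.


Lemma lin_derive (Mb : R) t : is_derive (fun t => Mb * t) t Mb.
Proof. auto_derive; auto; ring. Qed.

Lemma f_bounds f fs fq Mb : C1_T1 f fs fq -> C1_norm_T1 f fs fq <= Mb ->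
  forall s q, inT1 s q -> Rabs (f s q) <= Mb /\ Rabs (fs s q) <= Mb /\ Rabs (fq s q) <= Mb.
Proof.
  intros [Hf [Hfs [Hfq _]]] HN s q Hsq. unfold C1_norm_T1 in HN.
  assert (A1 := Rmax_l (sup_T1 f) (Rmax (sup_T1 fs) (sup_T1 fq))).
  assert (A2 := Rmax_r (sup_T1 f) (Rmax (sup_T1 fs) (sup_T1 fq))).
  assert (A3 := Rmax_l (sup_T1 fs) (sup_T1 fq)).
  assert (A4 := Rmax_r (sup_T1 fs) (sup_T1 fq)).
  assert (B1 := sup_T1_ge f s q (T1_bounded f Hf) Hsq).
  assert (B2 := sup_T1_ge fs s q (T1_bounded fs Hfs) Hsq).
  assert (B3 := sup_T1_ge fq s q (T1_bounded fq Hfq) Hsq).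
  lra.
Qed.

Lemma lip_gen (g dg : R -> R) a b Mb : a <= b -> cont_rel g a b ->
  (forall t, a < t < b -> is_derive g t (dg t) /\ Rabs (dg t) <= Mb) ->
  Rabs (g b - g a) <= Mb * (b - a).
Proof.
  intros Hab Hg Hd.
  assert (H := cmp0 g dg (fun t => Mb * t) (fun _ => Mb) a b Hab Hg (lin_derive Mb) Hd).
  lra.
Qed.

Lemma f_lip_s f fs fq Mb a b q : C1_T1 f fs fq -> C1_norm_T1 f fs fq <= Mb ->
  q < 1 -> inT1 a q -> inT1 b q -> Rabs (f b q - f a q) <= Mb * Rabs (b - a).
Proof.
  intros HC HN Hq Ha Hb. assert (HB := f_bounds f fs fq Mb HC HN).
  destruct HC as [Hf [_ [_ Hd]]].
  assert (gen : forall a b, a <= b -> inT1 a q -> inT1 b q -> Rabs (f b q - f a q) <= Mb * Rabs (b - a)).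
  { clear a b Ha Hb. intros a b Hab Ha Hb. rewrite (Rabs_right (b - a)) by lra.
    apply (lip_gen (fun t => f t q) (fun t => fs t q)); auto.
    - apply (cont_on_row inT1); auto. intros r Hr. unfold inT1 in *; lra.
    - intros t Ht. unfold inT1 in *. split. apply (Hd t q); lra. apply HB; unfold inT1; lra. }
  destruct (Rle_dec a b). apply gen; auto.
  rewrite <- Rabs_Ropp, Ropp_minus_distr, <- (Rabs_Ropp (b - a)), Ropp_minus_distr. apply gen; auto; lra.
Qed.

Lemma f_lip_q f fs fq Mb s a b : C1_T1 f fs fq -> C1_norm_T1 f fs fq <= Mb ->
  0 < s -> inT1 s a -> inT1 s b -> Rabs (f s b - f s a) <= Mb * Rabs (b - a).
Proof.
  intros HC HN Hs Ha Hb. assert (HB := f_bounds f fs fq Mb HC HN).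
  destruct HC as [Hf [_ [_ Hd]]].
  assert (gen : forall a b, a <= b -> inT1 s a -> inT1 s b -> Rabs (f s b - f s a) <= Mb * Rabs (b - a)).
  { clear a b Ha Hb. intros a b Hab Ha Hb. rewrite (Rabs_right (b - a)) by lra.
    apply (lip_gen (fun t => f s t) (fun t => fq s t)); auto.
    - apply (cont_on_col inT1); auto. intros r Hr. unfold inT1 in *; lra.
    - intros t Ht. unfold inT1 in *. split. apply (Hd s t); lra. apply HB; unfold inT1; lra. }
  destruct (Rle_dec a b). apply gen; auto.
  rewrite <- Rabs_Ropp, Ropp_minus_distr, <- (Rabs_Ropp (b - a)), Ropp_minus_distr. apply gen; auto; lra.
Qed.


Lemma shift_derive (G : R -> R) t d : is_derive (fun u => G (t + u)) 0 d -> is_derive G t d.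
Proof.
  intros H.
  assert (H2 : is_derive (fun x => (fun u => G (t + u)) (x - t)) t (scal 1 d)).
  { apply (is_derive_comp (fun u => G (t + u)) (fun x => x - t)).
    replace (t - t) with 0 by ring. auto.
    auto_derive; auto. }
  change (scal 1 d) with (1 * d) in H2; rewrite Rmult_1_l in H2. apply (is_derive_ext (fun x => G (t + (x - t)))); auto.
  intros x. f_equal. ring.
Qed.

Lemma exp_le x y : x <= y -> exp x <= exp y.
Proof. intros [H| ->]; [left; apply exp_increasing; auto| lra]. Qed.

Lemma exp_le_1 x : x <= 0 -> exp x <= 1.
Proof. intros H. rewrite <- exp_0. apply exp_le; auto. Qed.

Definition inTr (Q s q : R) : Prop := 0 <= s /\ s <= q /\ q <= Q.

Lemma Tr_bounded Q g : Q <= 1 -> cont_on (inTr Q) g -> exists B, forall s q, inTr Q s q -> Rabs (g s q) <= B.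
Proof.
  intros HQ Hg. apply bounded_sq; [unfold inTr; intros; lra | | auto].
  intros x y H. unfold inTr in *.
  destruct (Rlt_dec x 0) as [H1|H1].
  { exists (-x); split; [lra|]. intros x' y' A1 B1 [C _]. apply Rabs_def2 in A1. lra. }
  destruct (Rlt_dec y x) as [H2|H2].
  { exists ((x - y)/2); split; [lra|]. intros x' y' A1 B1 [_ [C _]]. apply Rabs_def2 in A1. apply Rabs_def2 in B1. lra. }
  destruct (Rlt_dec Q y) as [H3|H3].
  { exists (y - Q); split; [lra|]. intros x' y' A1 B1 [_ [_ C]]. apply Rabs_def2 in B1. lra. }
  exfalso. apply H. lra.
Qed.

Lemma cont_rel_diag1 (D : R -> R -> Prop) w a c : cont_on D w ->
  (forall t, 0 <= t <= a -> D t (c + t)) -> cont_rel (fun t => w t (c + t)) 0 a.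
Proof.
  intros Hw HD x Hx eps He. destruct (Hw x (c + x) (HD x Hx) eps He) as [d [Hd H]].
  exists d; split; auto. intros y Hy Hyx. apply H; auto.
  replace (c + y - (c + x)) with (y - x) by ring. auto.
Qed.

Lemma GF (w : R -> R -> R) Q A E : 0 < Q <= 1 -> 0 < A -> 0 <= E ->
  cont_on (inTr Q) w -> (forall q, 0 <= q <= Q -> w 0 q = 0) ->
  (forall s q, 0 < s -> s < q -> q < Q -> exists d,
      is_derive (fun t => w (s + t) (q + t)) 0 d /\
      forall W, (forall r, s <= r < q -> Rabs (w r q) <= W) -> Rabs d <= A * W + E) ->
  forall s q, 0 <= s -> s < q -> q <= Q -> Rabs (w s q) <= 2 * E * exp (2 * A).
Proof.
  intros HQ HA HE Hc H0 Hd.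
  set (lam := 2 * A).
  set (D := fun s q => 0 <= s /\ s < q /\ q <= Q).
  set (phi := fun s q => Rabs (w s q) * exp (- lam * q)).
  assert (HG : forall s q, D s q -> phi s q <= 2 * E).
  { apply gron.
    - destruct (Tr_bounded Q w ltac:(lra) Hc) as [B HB]. exists B. intros x y [Hx [Hxy Hy]].
      unfold phi. assert (0 < exp (- lam * y)) by apply exp_pos.
      assert (exp (- lam * y) <= 1). { rewrite <- exp_0. apply exp_le.
        unfold lam. pose proof (Rabs_pos y). nra. }
      assert (Rabs (w x y) <= B) by (apply HB; unfold inTr; lra).
      pose proof (Rabs_pos (w x y)). nra.
    - intros V HV s q [Hs [Hsq Hq]].
      assert (HV0 : 0 <= V) by (eapply Rle_trans; [|apply (HV s q); unfold D; lra];
        unfold phi; apply Rmult_le_pos; [apply Rabs_pos| left; apply exp_pos]).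
      destruct (Req_dec s 0) as [Hs0|Hs0].
      { subst s. unfold phi. rewrite H0 by lra. rewrite Rabs_R0. lra. }
      set (g := fun t => w t (q - s + t)).
      set (Pd := fun t d => is_derive (fun u => w (t + u) (q - s + t + u)) 0 d /\
                  forall W, (forall r, t <= r < q - s + t -> Rabs (w r (q - s + t)) <= W) -> Rabs d <= A * W + E).
      set (dg' := fun t => epsilon (inhabits 0) (Pd t)).
      assert (Hdg : forall t, 0 < t < s -> Pd t (dg' t)).
      { intros t Ht. unfold dg'. apply epsilon_spec. apply Hd; lra. }
      set (c := A * V / lam).
      assert (Hcmp := cmp0 g dg' (fun t => c * exp (lam * (q - s + t)) + E * t)
                        (fun t => c * lam * exp (lam * (q - s + t)) + E) 0 s ltac:(lra)).
      assert (Hcr : cont_rel g 0 s).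
      { apply (cont_rel_diag1 (inTr Q) w s (q - s)); auto. intros t Ht; unfold inTr; lra. }
      specialize (Hcmp Hcr).
      assert (Hphi : forall t, is_derive (fun t => c * exp (lam * (q - s + t)) + E * t) t
                       (c * lam * exp (lam * (q - s + t)) + E)).
      { intros t. auto_derive; auto. ring. }
      specialize (Hcmp Hphi).
      assert (Hb : forall t, 0 < t < s -> is_derive g t (dg' t) /\
                 Rabs (dg' t) <= c * lam * exp (lam * (q - s + t)) + E).
      { intros t Ht. destruct (Hdg t Ht) as [Hder Hbd]. split.
        - apply shift_derive. unfold g. 
          apply (is_derive_ext (fun u => w (t + u) (q - s + t + u))); auto.
          intros u. f_equal. ring.
        - assert (Hr := Hbd (V * exp (lam * (q - s + t)))).
          assert (X : Rabs (dg' t) <= A * (V * exp (lam * (q - s + t))) + E).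
          { apply Hr. intros r Hr'. 
            assert (HV' := HV r (q - s + t) ltac:(unfold D; lra)). unfold phi in HV'.
            assert (exp (- lam * (q - s + t)) * exp (lam * (q - s + t)) = 1).
            { rewrite <- exp_plus. replace (- lam * (q - s + t) + lam * (q - s + t)) with 0 by ring. apply exp_0. }
            assert (0 < exp (lam * (q - s + t))) by apply exp_pos.
            replace (Rabs (w r (q - s + t))) with (Rabs (w r (q - s + t)) * exp (- lam * (q - s + t)) * exp (lam * (q - s + t))) by (rewrite Rmult_assoc, H; ring).
            apply Rmult_le_compat_r; lra. }
          replace (c * lam) with (A * V) by (unfold c, lam; field; lra). lra. }
      specialize (Hcmp Hb).
      unfold g in Hcmp. replace (q - s + s) with q in Hcmp by ring. replace (q - s + 0) with (q - s) in Hcmp by ring.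
      rewrite H0 in Hcmp by lra. rewrite Rminus_0_r in Hcmp.
      assert (Hexp : exp (lam * (q - s)) > 0) by apply exp_pos.
      assert (Hc0 : 0 <= c) by (unfold c, lam; apply Rmult_le_pos; [nra| left; apply Rinv_0_lt_compat; lra]).
      assert (Hw : Rabs (w s q) <= c * exp (lam * q) + E).
      { assert (E * s <= E) by nra. nra. }
      unfold phi. 
      assert (Hm : exp (lam * q) * exp (- lam * q) = 1).
      { rewrite <- exp_plus. replace (lam * q + - lam * q) with 0 by ring. apply exp_0. }
      assert (exp (- lam * q) <= 1). { rewrite <- exp_0. apply exp_le. unfold lam. nra. }
      assert (0 < exp (- lam * q)) by apply exp_pos.
      assert (Rabs (w s q) * exp (- lam * q) <= (c * exp (lam * q) + E) * exp (- lam * q))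
        by (apply Rmult_le_compat_r; lra).
      assert (c = V / 2) by (unfold c, lam; field; lra).
      nra. }
  intros s q Hs Hsq Hq.
  assert (H1 := HG s q ltac:(unfold D; lra)). unfold phi in H1.
  assert (Hm : exp (- lam * q) * exp (lam * q) = 1).
  { rewrite <- exp_plus. replace (- lam * q + lam * q) with 0 by ring. apply exp_0. }
  assert (HE2 : exp (lam * q) <= exp (2 * A)) by (apply exp_le; unfold lam; nra).
  assert (0 < exp (lam * q)) by apply exp_pos.
  replace (Rabs (w s q)) with (Rabs (w s q) * exp (- lam * q) * exp (lam * q)) by (rewrite Rmult_assoc, Hm; ring).
  assert (HH : Rabs (w s q) * exp (- lam * q) * exp (lam * q) <= 2 * E * exp (lam * q)) by (apply Rmult_le_compat_r; lra).
  eapply Rle_trans; [exact HH|]. apply Rmult_le_compat_l. lra. exact HE2.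
Qed.


Lemma diag_ext (u : R -> R -> R) c0 c1 : cont_on inT1 u -> 0 <= c1 ->
  (forall s q, inT1 s q -> s < q -> Rabs (u s q) <= c0 + c1 * s) ->
  forall s q, inT1 s q -> Rabs (u s q) <= c0 + c1 * s.
Proof.
  intros Hc Hc1 H s q Hsq. destruct (Rlt_dec s q) as [Hl|Hl]; [apply H; auto|].
  assert (Hq : q = s) by (unfold inT1 in Hsq; lra). subst q.
  apply Rnot_lt_le. intros Hgt.
  set (eps := Rabs (u s s) - (c0 + c1 * s)).
  assert (Heps : eps = Rabs (u s s) - (c0 + c1 * s)) by reflexivity.
  destruct (Hc s s Hsq eps ltac:(unfold eps; lra)) as [d [Hd Hcd]].
  assert (Hh : Rabs (u s s) - Rabs (u s s - (u s s - eps)) <= Rabs (u s s - eps)) by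
    (pose proof (Rabs_triang_inv (u s s) (u s s - eps)); lra).
  destruct (Rlt_dec 0 s) as [Hs|Hs].
  - set (s' := s - Rmin (s/2) (d/2)).
    assert (Hm1 := Rmin_l (s/2) (d/2)). assert (Hm2 := Rmin_r (s/2) (d/2)).
    assert (Hm0 : 0 < Rmin (s/2) (d/2)) by (apply Rmin_pos; lra).
    assert (Hin : inT1 s' s) by (unfold inT1 in *; unfold s'; lra).
    assert (A1 := H s' s Hin ltac:(unfold s'; lra)).
    assert (A2 := Hcd s' s Hin ltac:(unfold s'; rewrite Rabs_left; lra) ltac:(rewrite Rminus_diag, Rabs_R0; lra)).
    assert (c1 * s' <= c1 * s) by (apply Rmult_le_compat_l; unfold s'; lra).
    assert (Rabs (u s s) <= Rabs (u s' s) + Rabs (u s' s - u s s)).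
    { replace (u s s) with (u s' s - (u s' s - u s s)) at 1 by ring.
      eapply Rle_trans. apply Rabs_triang. rewrite Rabs_Ropp. lra. }
    lra.
  - apply Rnot_lt_le in Hs. assert (s = 0) by (unfold inT1 in Hsq; lra). subst s.
    set (q' := Rmin (1/2) (d/2)).
    assert (Hm1 : q' <= 1/2) by apply Rmin_l. assert (Hm2 : q' <= d/2) by apply Rmin_r.
    assert (Hm0 : 0 < q') by (apply Rmin_pos; lra).
    assert (Hin : inT1 0 q') by (unfold inT1; lra).
    assert (A1 := H 0 q' Hin Hm0).
    assert (A2 := Hcd 0 q' Hin ltac:(rewrite Rminus_diag, Rabs_R0; lra) ltac:(rewrite Rminus_0_r, Rabs_right; lra)).
    assert (Rabs (u 0 0) <= Rabs (u 0 q') + Rabs (u 0 q' - u 0 0)).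
    { replace (u 0 0) with (u 0 q' - (u 0 q' - u 0 0)) at 1 by ring.
      eapply Rle_trans. apply Rabs_triang. rewrite Rabs_Ropp. lra. }
    lra.
Qed.

Definition setup (h : R) (f fs fq F M P : R -> R -> R) (Mb : R) : Prop :=
  C1_T1 f fs fq /\ C1_norm_T1 f fs fq <= Mb /\ kernel_sol h f F M P /\ 0 < Mb.

Lemma Rabs_le_0 x W : Rabs x <= W -> 0 <= W.
Proof. pose proof (Rabs_pos x). lra. Qed.

Lemma ex_RInt_fF (f F : R -> R -> R) s q : cont_on inT1 f -> cont_on inT1 F -> inT1 s q ->
  ex_RInt (fun r => f s r * F r q) s q.
Proof.
  intros Hf HF Hsq. unfold inT1 in Hsq. apply cont_rel_ex_RInt; [lra|].
  apply cont_rel_mult.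
  - apply (cont_on_col inT1); auto. intros r Hr; unfold inT1; lra.
  - apply (cont_on_row inT1); auto. intros r Hr; unfold inT1; lra.
Qed.

Definition CFc (Mb : R) := 2 * Mb * exp (2 * Mb).

Lemma F_bound h f fs fq F M P Mb : setup h f fs fq F M P Mb ->
  forall s q, inT1 s q -> Rabs (F s q) <= CFc Mb.
Proof.
  intros [HC [HN [HK HMb]]].
  destruct HK as [HFc [_ [_ [HFd [HF0 _]]]]].
  assert (Hfb := f_bounds f fs fq Mb HC HN). destruct HC as [Hfc _].
  assert (H : forall s q, inT1 s q -> s < q -> Rabs (F s q) <= CFc Mb + 0 * s).
  { intros s q Hsq Hl. rewrite Rmult_0_l, Rplus_0_r. unfold CFc.
    replace (2 * Mb * exp (2 * Mb)) with (2 * Mb * exp (2 * Mb)) by ring.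
    apply (GF F 1 Mb Mb ltac:(lra) HMb ltac:(lra) HFc); auto; [|unfold inT1 in *; lra..].
    intros s0 q0 Hs0 Hsq0 Hq0.
    exists (RInt (fun r => f s0 r * F r q0) s0 q0 - f s0 q0). split.
    - apply HFd; lra.
    - intros W HW. assert (HW0 := Rabs_le_0 _ _ (HW s0 ltac:(lra))).
      assert (HI : Rabs (RInt (fun r => f s0 r * F r q0) s0 q0) <= (q0 - s0) * (Mb * W)).
      { apply abs_RInt_le_open; [lra|nra|apply ex_RInt_fF; auto; unfold inT1; lra|].
        intros t Ht. rewrite Rabs_mult. apply Rmult_le_compat; auto using Rabs_pos.
        apply Hfb; unfold inT1; lra. apply HW; lra. }
      assert (Hf0 : Rabs (f s0 q0) <= Mb) by (apply Hfb; unfold inT1; lra).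
      unfold Rminus at 1. eapply Rle_trans. apply Rabs_triang. rewrite Rabs_Ropp.
      assert ((q0 - s0) * (Mb * W) <= Mb * W) by (assert (0 <= Mb * W) by nra; nra). lra. }
  intros s q Hsq. assert (X := diag_ext F (CFc Mb) 0 HFc ltac:(lra) H s q Hsq). lra.
Qed.

Lemma F_char h f fs fq F M P Mb a b c : setup h f fs fq F M P Mb ->
  0 < c -> 0 <= a <= b -> c + b <= 1 ->
  Rabs (F b (c + b) - F a (c + a)) <= Mb * (CFc Mb + 1) * (b - a).
Proof.
  intros HS Hc Hab Hcb. assert (HFb := F_bound h f fs fq F M P Mb HS).
  destruct HS as [HC [HN [HK HMb]]].
  destruct HK as [HFc [_ [_ [HFd [HF0 _]]]]].
  assert (Hfb := f_bounds f fs fq Mb HC HN). destruct HC as [Hfc _].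
  apply (lip_gen (fun t => F t (c + t)) (fun t => RInt (fun r => f t r * F r (c + t)) t (c + t) - f t (c + t))); [lra| |].
  - apply (cont_rel_sub _ 0 b); [lra|lra|]. apply (cont_rel_diag1 inT1); auto. intros t Ht; unfold inT1; lra.
  - intros t Ht. split.
    + apply shift_derive. apply (is_derive_ext (fun u => F (t + u) (c + t + u))).
      { intros u. f_equal. ring. }
      apply HFd; lra.
    + assert (HI : Rabs (RInt (fun r => f t r * F r (c + t)) t (c + t)) <= (c + t - t) * (Mb * CFc Mb)).
      { assert (0 <= CFc Mb) by (eapply Rabs_le_0; apply (HFb 0 0); unfold inT1; lra).
        apply abs_RInt_le_open; [lra|nra|apply ex_RInt_fF; auto; unfold inT1; lra|].
        intros r Hr. rewrite Rabs_mult. apply Rmult_le_compat; auto using Rabs_pos.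
        apply Hfb; unfold inT1; lra. apply HFb; unfold inT1; lra. }
      assert (Hf0 : Rabs (f t (c + t)) <= Mb) by (apply Hfb; unfold inT1; lra).
      assert (0 <= CFc Mb) by (eapply Rabs_le_0; apply (HFb 0 0); unfold inT1; lra).
      unfold Rminus at 1. eapply Rle_trans. apply Rabs_triang. rewrite Rabs_Ropp.
      replace (c + t - t) with c in HI by ring.
      assert (c * (Mb * CFc Mb) <= Mb * CFc Mb) by (assert (0 <= Mb * CFc Mb) by nra; nra). nra.
Qed.

Lemma F_lin h f fs fq F M P Mb : setup h f fs fq F M P Mb ->
  forall s q, inT1 s q -> Rabs (F s q) <= Mb * (CFc Mb + 1) * s.
Proof.
  intros HS. 
  assert (HF0 : forall q, 0 <= q <= 1 -> F 0 q = 0) by (destruct HS as [_ [_ [HK _]]]; apply HK).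
  assert (HFc : cont_on inT1 F) by (destruct HS as [_ [_ [HK _]]]; apply HK).
  assert (HMb : 0 < Mb) by apply HS.
  assert (HCF : 0 <= CFc Mb) by (eapply Rabs_le_0; apply (F_bound h f fs fq F M P Mb HS 0 0); unfold inT1; lra).
  intros s q Hsq. 
  assert (X := diag_ext F 0 (Mb * (CFc Mb + 1)) HFc ltac:(nra)).
  rewrite <- (Rplus_0_l (Mb * (CFc Mb + 1) * s)). apply X; auto.
  clear s q Hsq. intros s q Hsq Hl. rewrite Rplus_0_l.
  assert (Y := F_char h f fs fq F M P Mb 0 s (q - s) HS ltac:(lra) ltac:(unfold inT1 in *; lra) ltac:(unfold inT1 in *; lra)).
  replace (q - s + s) with q in Y by ring. rewrite Rplus_0_r in Y.
  rewrite HF0 in Y by (unfold inT1 in *; lra). rewrite Rminus_0_r, Rminus_0_r in Y. exact Y.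
Qed.

Lemma cont_on_minus (D : R -> R -> Prop) g1 g2 : cont_on D g1 -> cont_on D g2 -> cont_on D (fun s q => g1 s q - g2 s q).
Proof.
  intros H1 H2 s q Hsq eps He.
  destruct (H1 s q Hsq (eps/2) ltac:(lra)) as [d1 [Hd1 K1]]. destruct (H2 s q Hsq (eps/2) ltac:(lra)) as [d2 [Hd2 K2]].
  exists (Rmin d1 d2); split; [apply Rmin_pos; auto|]. intros s' q' Hs' A1 A2.
  assert (B1 := K1 s' q' Hs' ltac:(eapply Rlt_le_trans; [exact A1| apply Rmin_l]) ltac:(eapply Rlt_le_trans; [exact A2| apply Rmin_l])).
  assert (B2 := K2 s' q' Hs' ltac:(eapply Rlt_le_trans; [exact A1| apply Rmin_r]) ltac:(eapply Rlt_le_trans; [exact A2| apply Rmin_r])).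
  replace (g1 s' q' - g2 s' q' - (g1 s q - g2 s q)) with ((g1 s' q' - g1 s q) - (g2 s' q' - g2 s q)) by ring.
  eapply Rle_lt_trans. apply Rabs_triang. rewrite Rabs_Ropp. lra.
Qed.

Lemma cont_on_shiftq (D D' : R -> R -> Prop) g del : cont_on D g -> (forall s q, D' s q -> D s (q + del)) ->
  cont_on D' (fun s q => g s (q + del)).
Proof.
  intros H HD s q Hsq eps He. destruct (H s (q + del) (HD s q Hsq) eps He) as [d [Hd K]].
  exists d; split; auto. intros s' q' Hs' A1 A2. apply K; auto. replace (q' + del - (q + del)) with (q' - q) by ring. auto.
Qed.

Lemma cont_on_sub (D D' : R -> R -> Prop) g : cont_on D g -> (forall s q, D' s q -> D s q) -> cont_on D' g.
Proof.
  intros H HD s q Hsq eps He. destruct (H s q (HD s q Hsq) eps He) as [d [Hd K]].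
  exists d; split; auto.
Qed.

Definition Dfc (Df Mb : R) := 2 * (Df * (CFc Mb + 1)) * exp (2 * Mb).

Lemma F_diff h1 f1 f1s f1q F1 M1 P1 h2 f2 f2s f2q F2 M2 P2 Mb Df :
  setup h1 f1 f1s f1q F1 M1 P1 Mb -> setup h2 f2 f2s f2q F2 M2 P2 Mb -> 0 <= Df ->
  (forall s q, inT1 s q -> Rabs (f1 s q - f2 s q) <= Df) ->
  forall s q, inT1 s q -> Rabs (F1 s q - F2 s q) <= Dfc Df Mb.
Proof.
  intros HS1 HS2 HDf Hdf.
  assert (HF2b := F_bound h2 f2 f2s f2q F2 M2 P2 Mb HS2).
  assert (HCF : 0 <= CFc Mb) by (eapply Rabs_le_0; apply (HF2b 0 0); unfold inT1; lra).
  destruct HS1 as [HC1 [HN1 [HK1 HMb]]]. destruct HS2 as [HC2 [HN2 [HK2 _]]].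
  destruct HK1 as [HF1c [_ [_ [HF1d [HF10 _]]]]]. destruct HK2 as [HF2c [_ [_ [HF2d [HF20 _]]]]].
  assert (Hf1b := f_bounds f1 f1s f1q Mb HC1 HN1). destruct HC1 as [Hf1c _].
  assert (Hf2b := f_bounds f2 f2s f2q Mb HC2 HN2). destruct HC2 as [Hf2c _].
  assert (Hwc : cont_on inT1 (fun s q => F1 s q - F2 s q)) by (apply cont_on_minus; auto).
  intros s q Hsq.
  assert (X := diag_ext (fun s q => F1 s q - F2 s q) (Dfc Df Mb) 0 Hwc ltac:(lra)).
  rewrite <- (Rplus_0_r (Dfc Df Mb)). rewrite <- (Rmult_0_l s). apply X; auto.
  clear s q Hsq X. intros s q Hsq Hl. rewrite Rmult_0_l, Rplus_0_r. unfold Dfc.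
  apply (GF (fun s q => F1 s q - F2 s q) 1 Mb (Df * (CFc Mb + 1)) ltac:(lra) HMb ltac:(nra) Hwc);
    [| |unfold inT1 in *; lra..].
  { intros q0 Hq0. rewrite HF10, HF20 by lra. ring. }
  intros s0 q0 Hs0 Hsq0 Hq0.
  exists ((RInt (fun r => f1 s0 r * F1 r q0) s0 q0 - f1 s0 q0) - (RInt (fun r => f2 s0 r * F2 r q0) s0 q0 - f2 s0 q0)).
  split.
  - apply (is_derive_minus (fun t => F1 (s0 + t) (q0 + t)) (fun t => F2 (s0 + t) (q0 + t))).
    apply HF1d; lra. apply HF2d; lra.
  - intros W HW. assert (HW0 := Rabs_le_0 _ _ (HW s0 ltac:(lra))).
    assert (E1 := ex_RInt_fF f1 F1 s0 q0 Hf1c HF1c ltac:(unfold inT1; lra)).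
    assert (E2 := ex_RInt_fF f2 F2 s0 q0 Hf2c HF2c ltac:(unfold inT1; lra)).
    replace ((RInt (fun r => f1 s0 r * F1 r q0) s0 q0 - f1 s0 q0) - (RInt (fun r => f2 s0 r * F2 r q0) s0 q0 - f2 s0 q0))
      with (RInt (fun r => f1 s0 r * F1 r q0 - f2 s0 r * F2 r q0) s0 q0 - (f1 s0 q0 - f2 s0 q0))
      by (rewrite RInt_minus'; auto; ring).
    assert (HI : Rabs (RInt (fun r => f1 s0 r * F1 r q0 - f2 s0 r * F2 r q0) s0 q0) <= (q0 - s0) * (Mb * W + Df * CFc Mb)).
    { apply abs_RInt_le_open; [lra|nra|apply ex_RInt_minus'; auto|].
      intros t Ht.
      replace (f1 s0 t * F1 t q0 - f2 s0 t * F2 t q0) with (f1 s0 t * (F1 t q0 - F2 t q0) + (f1 s0 t - f2 s0 t) * F2 t q0) by ring.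
      eapply Rle_trans. apply Rabs_triang. rewrite !Rabs_mult.
      assert (Rabs (f1 s0 t) * Rabs (F1 t q0 - F2 t q0) <= Mb * W).
      { apply Rmult_le_compat; auto using Rabs_pos. apply Hf1b; unfold inT1; lra. apply HW; lra. }
      assert (Rabs (f1 s0 t - f2 s0 t) * Rabs (F2 t q0) <= Df * CFc Mb).
      { apply Rmult_le_compat; auto using Rabs_pos. apply Hdf; unfold inT1; lra. apply HF2b; unfold inT1; lra. }
      lra. }
    assert (Hf0 : Rabs (f1 s0 q0 - f2 s0 q0) <= Df) by (apply Hdf; unfold inT1; lra).
    unfold Rminus at 1. eapply Rle_trans. apply Rabs_triang. rewrite Rabs_Ropp.
    assert ((q0 - s0) * (Mb * W + Df * CFc Mb) <= Mb * W + Df * CFc Mb) by (assert (0 <= Mb * W + Df * CFc Mb) by nra; nra).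
    nra.
Qed.

Definition CLc (Mb : R) := Mb * (CFc Mb + 1) * (1 + 2 * exp (2 * Mb)).

Lemma F_lip_top h f fs fq F M P Mb s s' : setup h f fs fq F M P Mb ->
  0 <= s <= s' -> s' < 1 -> Rabs (F s' 1 - F s 1) <= CLc Mb * (s' - s).
Proof.
  intros HS Hss Hs'.
  assert (HFb := F_bound h f fs fq F M P Mb HS).
  assert (HCF : 0 <= CFc Mb) by (eapply Rabs_le_0; apply (HFb 0 0); unfold inT1; lra).
  assert (Hchar := F_char h f fs fq F M P Mb s s' (1 - s') HS ltac:(lra) ltac:(lra) ltac:(lra)).
  replace (1 - s' + s') with 1 in Hchar by ring.
  destruct (Req_dec s s') as [E|Hne].
  { subst s'. rewrite Rminus_diag, Rabs_R0. unfold CLc. 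
    assert (0 <= exp (2 * Mb)) by (left; apply exp_pos). destruct HS as [_ [_ [_ HMb]]]. nra. }
  set (del := s' - s).
  assert (Hdel : 0 < del) by (unfold del; lra).
  destruct HS as [HC [HN [HK HMb]]].
  destruct HK as [HFc [_ [_ [HFd [HF0 _]]]]].
  assert (Hfb := f_bounds f fs fq Mb HC HN). assert (HC' := HC). destruct HC' as [Hfc _].
  set (w := fun a q => F a (q + del) - F a q).
  assert (Hwc : cont_on (inTr (1 - del)) w).
  { apply cont_on_minus.
    - apply (cont_on_shiftq inT1); auto. intros a q H; unfold inTr, inT1 in *; unfold del in *; lra.
    - apply (cont_on_sub inT1); auto. intros a q H; unfold inTr, inT1 in *; unfold del in *; lra. }
  assert (Hw := GF w (1 - del) Mb (del * Mb * (CFc Mb + 1)) ltac:(unfold del; lra) HMb ltac:(unfold del; apply Rmult_le_pos; [apply Rmult_le_pos|]; lra) Hwc).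
  assert (Hw1 : Rabs (w s (1 - del)) <= 2 * (del * Mb * (CFc Mb + 1)) * exp (2 * Mb)).
  { apply Hw; [| |lra|unfold del; lra|lra].
    - intros q Hq. unfold w. rewrite !HF0 by (unfold del in *; lra). ring.
    - intros a q Ha Haq Hq.
      exists ((RInt (fun r => f a r * F r (q + del)) a (q + del) - f a (q + del)) - (RInt (fun r => f a r * F r q) a q - f a q)).
      split.
      + apply (is_derive_minus (fun t => F (a + t) (q + t + del)) (fun t => F (a + t) (q + t))).
        * apply (is_derive_ext (fun t => F (a + t) (q + del + t))). { intros t. f_equal. ring. }
          apply HFd; unfold del in *; lra.
        * apply HFd; lra.
      + intros W HW. assert (HW0 := Rabs_le_0 _ _ (HW a ltac:(lra))).
        assert (E0 := ex_RInt_fF f F a (q + del) Hfc HFc ltac:(unfold inT1, del in *; lra)).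
        assert (E1 : ex_RInt (fun r => f a r * F r (q + del)) a q) by (apply (ex_RInt_sub1 _ a q (q + del)); auto; unfold del in *; lra).
        assert (E2 : ex_RInt (fun r => f a r * F r (q + del)) q (q + del)) by (apply (ex_RInt_sub2 _ a q (q + del)); auto; unfold del in *; lra).
        assert (E3 := ex_RInt_fF f F a q Hfc HFc ltac:(unfold inT1, del in *; lra)).
        rewrite <- (RInt_Chasles' _ a q (q + del)) by auto.
        replace (RInt (fun r => f a r * F r (q + del)) a q + RInt (fun r => f a r * F r (q + del)) q (q + del) - f a (q + del) -
                  (RInt (fun r => f a r * F r q) a q - f a q))
          with (RInt (fun r => f a r * F r (q + del) - f a r * F r q) a q + RInt (fun r => f a r * F r (q + del)) q (q + del)
                 - (f a (q + del) - f a q)) by (rewrite RInt_minus'; auto; ring).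
        assert (I1 : Rabs (RInt (fun r => f a r * F r (q + del) - f a r * F r q) a q) <= (q - a) * (Mb * W)).
        { apply abs_RInt_le_open; [lra|nra|apply ex_RInt_minus'; auto|].
          intros t Ht. replace (f a t * F t (q + del) - f a t * F t q) with (f a t * w t q) by (unfold w; ring).
          rewrite Rabs_mult. apply Rmult_le_compat; auto using Rabs_pos. apply Hfb; unfold inT1; lra. apply HW; lra. }
        assert (I2 : Rabs (RInt (fun r => f a r * F r (q + del)) q (q + del)) <= (q + del - q) * (Mb * CFc Mb)).
        { apply abs_RInt_le_open; [unfold del in *; lra|nra|auto|].
          intros t Ht. rewrite Rabs_mult. apply Rmult_le_compat; auto using Rabs_pos.
          apply Hfb; unfold inT1, del in *; lra. apply HFb; unfold inT1, del in *; lra. }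
        assert (I3 : Rabs (f a (q + del) - f a q) <= Mb * Rabs (q + del - q)).
        { apply (f_lip_q f fs fq Mb a q (q + del)); auto; unfold inT1, del in *; lra. }
        replace (q + del - q) with del in I2, I3 by ring. rewrite (Rabs_right del) in I3 by lra.
        unfold Rminus at 1. eapply Rle_trans. apply Rabs_triang. rewrite Rabs_Ropp.
        eapply Rle_trans. apply Rplus_le_compat_r. apply Rabs_triang.
        assert ((q - a) * (Mb * W) <= Mb * W) by (assert (0 <= Mb * W) by nra; nra). nra. }
  unfold w in Hw1. replace (1 - del + del) with 1 in Hw1 by ring.
  replace (1 - del) with (1 - s' + s) in Hw1 by (unfold del; ring).
  replace (F s' 1 - F s 1) with ((F s' 1 - F s (1 - s' + s)) - (F s 1 - F s (1 - s' + s))) by ring.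
  eapply Rle_trans. apply Rabs_triang. rewrite Rabs_Ropp. fold del in Hchar |- *. unfold CLc. 
  replace (1 - s' + s) with (1 - s' + s) in Hchar by ring. nra.
Qed.


Definition Kf (M P : R -> R -> R) (s q : R) : R := if Rle_dec s q then P s q else M s q.

Lemma K_P M P s q : s <= q -> Kf M P s q = P s q.
Proof. intros H. unfold Kf. destruct Rle_dec; [auto|lra]. Qed.

Lemma K_M h f F M P s q : kernel_sol h f F M P -> inT3 s q -> Kf M P s q = M s q.
Proof.
  intros HK H3. unfold Kf, inT3 in *. destruct Rle_dec; auto.
  assert (s = q) by lra. subst q. symmetry. apply HK. lra.
Qed.

Lemma K_M' M P s q : q < s -> Kf M P s q = M s q.
Proof. intros H. unfold Kf. destruct Rle_dec; [lra|auto]. Qed.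

Lemma K_cont h f F M P : kernel_sol h f F M P -> cont_on inSq (Kf M P).
Proof.
  intros HK. destruct HK as [_ [HMc [HPc [_ [_ [_ [_ [HMP _]]]]]]]].
  intros s q Hsq eps He. unfold inSq in Hsq.
  destruct (Rlt_dec s q) as [H1|H1].
  - destruct (HPc s q ltac:(unfold inT1; lra) eps He) as [d [Hd K]].
    exists (Rmin d ((q - s)/2)); split; [apply Rmin_pos; lra|].
    intros s' q' Hs' A1 A2. assert (B1 := Rmin_l d ((q - s)/2)). assert (B2 := Rmin_r d ((q - s)/2)).
    apply Rabs_def2 in A1. apply Rabs_def2 in A2. unfold inSq in Hs'.
    rewrite !K_P by lra. apply K; unfold inT1; try lra; apply Rabs_def1; lra.
  - destruct (Rlt_dec q s) as [H2|H2].
    + destruct (HMc s q ltac:(unfold inT3; lra) eps He) as [d [Hd K]].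
      exists (Rmin d ((s - q)/2)); split; [apply Rmin_pos; lra|].
      intros s' q' Hs' A1 A2. assert (B1 := Rmin_l d ((s - q)/2)). assert (B2 := Rmin_r d ((s - q)/2)).
      apply Rabs_def2 in A1. apply Rabs_def2 in A2. unfold inSq in Hs'.
      rewrite !K_M' by lra. apply K; unfold inT3; try lra; apply Rabs_def1; lra.
    + assert (q = s) by lra. subst q.
      destruct (HPc s s ltac:(unfold inT1; lra) eps He) as [d1 [Hd1 K1]].
      destruct (HMc s s ltac:(unfold inT3; lra) eps He) as [d2 [Hd2 K2]].
      exists (Rmin d1 d2); split; [apply Rmin_pos; lra|].
      intros s' q' Hs' A1 A2. assert (B1 := Rmin_l d1 d2). assert (B2 := Rmin_r d1 d2). unfold inSq in Hs'.
      rewrite (K_P M P s s) by lra.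
      destruct (Rle_dec s' q').
      * rewrite K_P by lra. apply K1; unfold inT1; try lra.
      * rewrite K_M' by lra. rewrite <- (HMP s) by lra. apply K2; unfold inT3; try lra.
Qed.

Lemma K_left h f F M P q : kernel_sol h f F M P -> 0 <= q <= 1 -> Kf M P 0 q = 0.
Proof. intros HK Hq. rewrite K_P by lra. apply HK. auto. Qed.

Lemma K_top h f F M P s : kernel_sol h f F M P -> 0 <= s <= 1 -> Kf M P s 1 = h * F s 1.
Proof. intros HK Hs. rewrite K_P by lra. apply HK. auto. Qed.

Lemma ex_RInt_fK h f F M P s q : kernel_sol h f F M P -> cont_on inT1 f -> 0 <= s <= 1 -> 0 <= q <= 1 ->
  ex_RInt (fun r => f s r * Kf M P r q) s 1.
Proof.
  intros HK Hf Hs Hq. apply cont_rel_ex_RInt; [lra|]. apply cont_rel_mult.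
  - apply (cont_on_col inT1); auto. intros r Hr; unfold inT1; lra.
  - apply (cont_on_row inSq); auto. apply (K_cont h f F); auto. intros r Hr; unfold inSq; lra.
Qed.

Lemma locally_ball (P : R -> Prop) (rho : R) : 0 < rho -> (forall t, Rabs t < rho -> P t) -> locally 0 P.
Proof.
  intros Hr H. exists (mkposreal rho Hr). intros y Hy. apply H.
  unfold ball in Hy; cbn in Hy; unfold AbsRing_ball, abs, minus, plus, opp in Hy; cbn in Hy.
  rewrite Ropp_0, Rplus_0_r in Hy. auto.
Qed.

Lemma K_deriv h f fs fq F M P s q : 0 < h -> C1_T1 f fs fq -> kernel_sol h f F M P ->
  0 < s < 1 -> 0 < q < 1 -> s <> q ->
  is_derive (fun t => Kf M P (s + h * t) (q - t)) 0 (h * RInt (fun r => f s r * Kf M P r q) s 1).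
Proof.
  intros Hh HC HK Hs Hq Hne. assert (HK' := HK). destruct HC as [Hfc _].
  destruct HK' as [_ [_ [_ [_ [_ [HMd [HPd _]]]]]]].
  assert (Ex := ex_RInt_fK h f F M P s q HK Hfc ltac:(lra) ltac:(lra)).
  destruct (Rlt_dec s q) as [H1|H1].
  - assert (Hrho : 0 < (q - s) / (2 * (1 + h))) by (apply Rdiv_lt_0_compat; lra).
    apply (is_derive_ext_loc (fun t => P (s + h * t) (q - t))).
    { apply (locally_ball _ _ Hrho). intros t Ht. rewrite K_P; auto.
      apply Rabs_def2 in Ht. 
      assert (Hx : (1 + h) * t <= (1 + h) * ((q - s) / (2 * (1 + h)))) by (apply Rmult_le_compat_l; lra).
      assert (Hy : (1 + h) * - t <= (1 + h) * ((q - s) / (2 * (1 + h)))) by (apply Rmult_le_compat_l; lra).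
      replace ((1 + h) * ((q - s) / (2 * (1 + h)))) with ((q - s) / 2) in Hx, Hy by (field; lra). nra. }
    assert (E1 : ex_RInt (fun r => f s r * Kf M P r q) s q) by (apply (ex_RInt_sub1 _ s q 1); auto; lra).
    assert (E2 : ex_RInt (fun r => f s r * Kf M P r q) q 1) by (apply (ex_RInt_sub2 _ s q 1); auto; lra).
    rewrite <- (RInt_Chasles' _ s q 1) by auto.
    rewrite (RInt_ext (fun r => f s r * Kf M P r q) (fun r => f s r * P r q) s q).
    2:{ intros x Hx. rewrite Rmin_left in Hx by lra. rewrite Rmax_right in Hx by lra. rewrite K_P; auto; lra. }
    rewrite (RInt_ext (fun r => f s r * Kf M P r q) (fun r => f s r * M r q) q 1).
    2:{ intros x Hx. rewrite Rmin_left in Hx by lra. rewrite Rmax_right in Hx by lra. rewrite K_M'; auto; lra. }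
    replace (h * (RInt (fun r => f s r * P r q) s q + RInt (fun r => f s r * M r q) q 1))
      with (h * RInt (fun r => f s r * M r q) q 1 + h * RInt (fun r => f s r * P r q) s q) by ring.
    apply HPd; lra.
  - assert (H2 : q < s) by lra.
    assert (Hrho : 0 < (s - q) / (2 * (1 + h))) by (apply Rdiv_lt_0_compat; lra).
    apply (is_derive_ext_loc (fun t => M (s + h * t) (q - t))).
    { apply (locally_ball _ _ Hrho). intros t Ht. rewrite K_M'; auto.
      apply Rabs_def2 in Ht. 
      assert (Hx : (1 + h) * t <= (1 + h) * ((s - q) / (2 * (1 + h)))) by (apply Rmult_le_compat_l; lra).
      assert (Hy : (1 + h) * - t <= (1 + h) * ((s - q) / (2 * (1 + h)))) by (apply Rmult_le_compat_l; lra).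
      replace ((1 + h) * ((s - q) / (2 * (1 + h)))) with ((s - q) / 2) in Hx, Hy by (field; lra). nra. }
    rewrite (RInt_ext (fun r => f s r * Kf M P r q) (fun r => f s r * M r q) s 1).
    2:{ intros x Hx. rewrite Rmin_left in Hx by lra. rewrite Rmax_right in Hx by lra. rewrite K_M'; auto; lra. }
    apply HMd; lra.
Qed.

Lemma rev_derive (G : R -> R) t0 d : is_derive (fun u => G (t0 - u)) 0 d -> is_derive G t0 (- d).
Proof.
  intros H.
  assert (H2 : is_derive (fun x => (fun u => G (t0 - u)) (t0 - x)) t0 (scal (-1) d)).
  { apply (is_derive_comp (fun u => G (t0 - u)) (fun x => t0 - x)).
    replace (t0 - t0) with 0 by ring. auto.
    auto_derive; auto. }
  change (scal (-1) d) with (-1 * d) in H2. replace (-1 * d) with (- d) in H2 by ring.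
  apply (is_derive_ext (fun x => G (t0 - (t0 - x)))); auto.
  intros x. f_equal. ring.
Qed.

Lemma K_back_deriv h f fs fq F M P s q t0 : 0 < h -> C1_T1 f fs fq -> kernel_sol h f F M P ->
  s <= 1 -> 0 <= q -> 0 < t0 -> 0 < s - h * t0 -> q + t0 < 1 -> s - h * t0 <> q + t0 ->
  is_derive (fun t => Kf M P (s - h * t) (q + t)) t0
    (- (h * RInt (fun r => f (s - h * t0) r * Kf M P r (q + t0)) (s - h * t0) 1)).
Proof.
  intros Hh HC HK Hs Hq Ht0 H1 H2 H3.
  apply rev_derive.
  apply (is_derive_ext (fun u => Kf M P ((s - h * t0) + h * u) ((q + t0) - u))).
  { intros u. f_equal; ring. }
  apply (K_deriv h f fs fq F M P); auto; try lra. split; [auto|]. assert (0 < h * t0) by nra. lra.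
Qed.

Lemma row_bound (f : R -> R -> R) (K : R -> R -> R) Mb W s q : 0 <= s <= 1 ->
  ex_RInt (fun r => f s r * K r q) s 1 ->
  (forall r, s <= r <= 1 -> Rabs (f s r) <= Mb) -> 0 <= Mb ->
  (forall r, 0 <= r <= 1 -> Rabs (K r q) <= W) ->
  Rabs (RInt (fun r => f s r * K r q) s 1) <= Mb * W.
Proof.
  intros Hs Ex Hf HMb HW. assert (HW0 : 0 <= W) by (eapply Rabs_le_0; apply (HW 0); lra).
  eapply Rle_trans. apply abs_RInt_le_open with (M := Mb * W); auto; [lra|nra|].
  - intros t Ht. rewrite Rabs_mult. apply Rmult_le_compat; auto using Rabs_pos; [apply Hf|apply HW]; lra.
  - assert (0 <= Mb * W) by nra. nra.
Qed.


Lemma GKgen (u : R -> R -> R) A E B : 0 < A -> 0 <= E -> 0 <= B ->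
  (exists Bd, forall s q, inSq s q -> Rabs (u s q) <= Bd) ->
  (forall s q, inSq s q -> exists (g dg : R -> R) (T p1 p2 : R),
     0 <= T <= 1 - q /\ g 0 = u s q /\ Rabs (g T) <= B /\ cont_rel g 0 T /\
     forall V, (forall s' q', inSq s' q' -> Rabs (u s' q') <= V * exp (2 * A * (1 - q'))) ->
       forall t, 0 < t < T -> t <> p1 -> t <> p2 ->
         is_derive g t (dg t) /\ Rabs (dg t) <= A * V * exp (2 * A * (1 - q - t)) + E) ->
  forall s q, inSq s q -> Rabs (u s q) <= 2 * (B + E) * exp (2 * A).
Proof.
  intros HA HE HB Hbd Hch.
  set (lam := 2 * A).
  set (phi := fun s q => Rabs (u s q) * exp (- lam * (1 - q))).
  assert (Hexp : forall x, exp x * exp (- x) = 1).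
  { intros x. rewrite <- exp_plus. replace (x + - x) with 0 by ring. apply exp_0. }
  assert (HG : forall s q, inSq s q -> phi s q <= 2 * (B + E)).
  { apply gron.
    - destruct Hbd as [Bd HBd]. exists Bd. intros x y Hxy. unfold phi.
      assert (0 < exp (- lam * (1 - y))) by apply exp_pos.
      assert (exp (- lam * (1 - y)) <= 1). { apply exp_le_1. unfold inSq in Hxy. destruct Hxy as [[? ?] [? ?]]. unfold lam. nra. }
      assert (Rabs (u x y) <= Bd) by auto. pose proof (Rabs_pos (u x y)). nra.
    - intros V HV s q Hsq.
      assert (HV0 : 0 <= V) by (eapply Rle_trans; [|apply (HV s q Hsq)];
        unfold phi; apply Rmult_le_pos; [apply Rabs_pos| left; apply exp_pos]).
      assert (HV' : forall s' q', inSq s' q' -> Rabs (u s' q') <= V * exp (2 * A * (1 - q'))).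
      { intros s' q' H. assert (X := HV s' q' H). unfold phi in X.
        assert (Y := Hexp (lam * (1 - q'))).
        replace (- (lam * (1 - q'))) with (- lam * (1 - q')) in Y by ring.
        assert (0 < exp (lam * (1 - q'))) by apply exp_pos.
        replace (Rabs (u s' q')) with (Rabs (u s' q') * exp (- lam * (1 - q')) * exp (lam * (1 - q'))) by (rewrite Rmult_assoc, (Rmult_comm (exp _)), Y; ring).
        replace (2 * A * (1 - q')) with (lam * (1 - q')) by reflexivity.
        apply Rmult_le_compat_r; lra. }
      destruct (Hch s q Hsq) as [g [dg [T [p1 [p2 [HT [Hg0 [HgT [Hgc Hd]]]]]]]]].
      set (c := A * V / lam).
      assert (Hcmp := cmp2 g dg (fun t => - c * exp (lam * (1 - q - t)) + E * t)
                        (fun t => A * V * exp (lam * (1 - q - t)) + E) 0 T p1 p2 ltac:(lra) Hgc).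
      assert (Hphi : forall t, is_derive (fun t => - c * exp (lam * (1 - q - t)) + E * t) t
                       (A * V * exp (lam * (1 - q - t)) + E)).
      { intros t. auto_derive; auto. replace (1 - q + - t) with (1 - q - t) by ring. unfold c. field. unfold lam; lra. }
      specialize (Hcmp Hphi (Hd V HV')).
      rewrite Hg0 in Hcmp. replace (1 - q - 0) with (1 - q) in Hcmp by ring.
      assert (Hc0 : 0 <= c) by (unfold c, lam; apply Rmult_le_pos; [nra| left; apply Rinv_0_lt_compat; lra]).
      assert (0 < exp (lam * (1 - q - T))) by apply exp_pos.
      assert (ET : E * T <= E) by (unfold inSq in Hsq; destruct Hsq as [[? ?] [? ?]]; nra).
      assert (Hw : Rabs (u s q) <= B + c * exp (lam * (1 - q)) + E).
      { replace (u s q) with (g T - (g T - u s q)) by ring.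
        eapply Rle_trans. apply Rabs_triang. rewrite Rabs_Ropp.
        assert (c * exp (lam * (1 - q - T)) >= 0) by nra. nra. }
      unfold phi.
      assert (Hm := Hexp (lam * (1 - q))). replace (- (lam * (1 - q))) with (- lam * (1 - q)) in Hm by ring.
      assert (exp (- lam * (1 - q)) <= 1). { apply exp_le_1. unfold inSq in Hsq. destruct Hsq as [[? ?] [? ?]]. unfold lam. nra. }
      assert (0 < exp (- lam * (1 - q))) by apply exp_pos.
      assert (Rabs (u s q) * exp (- lam * (1 - q)) <= (B + c * exp (lam * (1 - q)) + E) * exp (- lam * (1 - q)))
        by (apply Rmult_le_compat_r; lra).
      assert (c = V / 2) by (unfold c, lam; field; lra).
      nra. }
  intros s q Hsq.
  assert (H1 := HG s q Hsq). unfold phi in H1.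
  assert (Hm := Hexp (lam * (1 - q))). replace (- (lam * (1 - q))) with (- lam * (1 - q)) in Hm by ring.
  assert (HE2 : exp (lam * (1 - q)) <= exp (2 * A)) by (apply exp_le; unfold inSq in Hsq; destruct Hsq as [[? ?] [? ?]]; unfold lam; nra).
  assert (0 < exp (lam * (1 - q))) by apply exp_pos.
  replace (Rabs (u s q)) with (Rabs (u s q) * exp (- lam * (1 - q)) * exp (lam * (1 - q))) by (rewrite Rmult_assoc, (Rmult_comm (exp (- lam * (1 - q)))), Hm; ring).
  assert (HH : Rabs (u s q) * exp (- lam * (1 - q)) * exp (lam * (1 - q)) <= 2 * (B + E) * exp (lam * (1 - q))) by (apply Rmult_le_compat_r; lra).
  eapply Rle_trans; [exact HH|]. apply Rmult_le_compat_l. lra. exact HE2.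
Qed.


Lemma cont_rel_char (K : R -> R -> R) a b c d T : cont_on inSq K ->
  (forall t, 0 <= t <= T -> inSq (a + b * t) (c + d * t)) ->
  cont_rel (fun t => K (a + b * t) (c + d * t)) 0 T.
Proof.
  intros HK Hin x Hx eps He. destruct (HK _ _ (Hin x Hx) eps He) as [del [Hdel H]].
  set (m := 1 + Rabs b + Rabs d).
  assert (Hm : 1 <= m) by (unfold m; pose proof (Rabs_pos b); pose proof (Rabs_pos d); lra).
  exists (del / m). split; [apply Rdiv_lt_0_compat; lra|]. intros y Hy Hyx.
  assert (Hyx' : Rabs (y - x) * m < del).
  { apply Rmult_lt_compat_r with (r := m) in Hyx; [|lra]. 
    replace (del / m * m) with del in Hyx by (field; lra). auto. }
  apply H; auto.
  - replace (a + b * y - (a + b * x)) with (b * (y - x)) by ring. rewrite Rabs_mult.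
    assert (Rabs b * Rabs (y - x) <= m * Rabs (y - x)) by (apply Rmult_le_compat_r; [apply Rabs_pos| unfold m; pose proof (Rabs_pos d); lra]).
    nra.
  - replace (c + d * y - (c + d * x)) with (d * (y - x)) by ring. rewrite Rabs_mult.
    assert (Rabs d * Rabs (y - x) <= m * Rabs (y - x)) by (apply Rmult_le_compat_r; [apply Rabs_pos| unfold m; pose proof (Rabs_pos b); lra]).
    nra.
Qed.

Definition CKc (Mb hp : R) := 2 * (hp * CFc Mb + 0) * exp (2 * (hp * Mb)).

Lemma char_T s q h : inSq s q -> 0 < h ->
  0 <= Rmin (s / h) (1 - q) <= 1 - q /\ Rmin (s / h) (1 - q) <= s / h.
Proof.
  intros Hsq Hh. unfold inSq in Hsq.
  assert (0 <= s / h) by (apply Rmult_le_pos; [lra| left; apply Rinv_0_lt_compat; lra]).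
  split; [split|]. apply Rmin_glb; lra. apply Rmin_r. apply Rmin_l.
Qed.

Lemma char_in s q h t : inSq s q -> 0 < h -> 0 <= t <= Rmin (s / h) (1 - q) ->
  inSq (s + - h * t) (q + 1 * t).
Proof.
  intros Hsq Hh Ht. destruct (char_T s q h Hsq Hh) as [[T0 T1] T2]. unfold inSq in *.
  assert (h * t <= s).
  { assert (h * t <= h * (s / h)) by (apply Rmult_le_compat_l; lra).
    replace (h * (s / h)) with s in H by (field; lra). auto. }
  assert (0 <= h * t) by nra. lra.
Qed.

Lemma char_lt s q h t : inSq s q -> 0 < h -> 0 < t < Rmin (s / h) (1 - q) ->
  0 < s - h * t /\ q + t < 1.
Proof.
  intros Hsq Hh Ht. destruct (char_T s q h Hsq Hh) as [[T0 T1] T2]. unfold inSq in *.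
  assert (h * t < s).
  { assert (h * t < h * (s / h)) by (apply Rmult_lt_compat_l; lra).
    replace (h * (s / h)) with s in H by (field; lra). auto. }
  lra.
Qed.

Lemma char_end s q h : inSq s q -> 0 < h ->
  (Rmin (s / h) (1 - q) = s / h /\ s - h * (s / h) = 0 /\ q + s / h <= 1) \/
  (Rmin (s / h) (1 - q) = 1 - q /\ 0 <= s - h * (1 - q) <= 1 /\ q + (1 - q) = 1).
Proof.
  intros Hsq Hh. unfold inSq in Hsq. unfold Rmin. destruct Rle_dec.
  - left. split; auto. split. field; lra. lra.
  - right. split; auto. split; [|ring].
    assert (h * (1 - q) < h * (s / h)) by (apply Rmult_lt_compat_l; lra).
    replace (h * (s / h)) with s in H by (field; lra). assert (0 <= h * (1 - q)) by nra. lra.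
Qed.

Lemma diag_neq s q h t : 0 < h -> t <> (s - q) / (1 + h) -> s - h * t <> q + t.
Proof.
  intros Hh Hne E. apply Hne. apply (Rmult_eq_reg_l (1 + h)); [|lra].
  field_simplify; lra.
Qed.

Lemma K_bound h f fs fq F M P Mb hp : setup h f fs fq F M P Mb -> 0 < h <= hp ->
  forall s q, inSq s q -> Rabs (Kf M P s q) <= CKc Mb hp.
Proof.
  intros HS Hh.
  assert (HFb := F_bound h f fs fq F M P Mb HS).
  assert (HCF : 0 <= CFc Mb) by (eapply Rabs_le_0; apply (HFb 0 0); unfold inT1; lra).
  destruct HS as [HC [HN [HK HMb]]].
  assert (Hfb := f_bounds f fs fq Mb HC HN). assert (HC' := HC). destruct HC' as [Hfc _].
  assert (HKc := K_cont h f F M P HK).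
  unfold CKc. apply GKgen; [nra|lra|nra|apply Sq_bounded; auto|].
  intros s q Hsq.
  set (T := Rmin (s / h) (1 - q)).
  exists (fun t => Kf M P (s + - h * t) (q + 1 * t)).
  exists (fun t => - (h * RInt (fun r => f (s - h * t) r * Kf M P r (q + t)) (s - h * t) 1)).
  exists T, ((s - q) / (1 + h)), ((s - q) / (1 + h)).
  destruct (char_T s q h Hsq ltac:(lra)) as [HT1 HT2]. fold T in HT1, HT2.
  split; [auto|]. split; [f_equal; ring|]. split; [|split].
  - destruct (char_end s q h Hsq ltac:(lra)) as [[E1 [E2 E3]]|[E1 [E2 E3]]]; fold T in E1; rewrite E1.
    + replace (s + - h * (s / h)) with (s - h * (s / h)) by ring. rewrite E2.
      assert (0 <= s/h) by (unfold inSq in Hsq; apply Rmult_le_pos; [lra| left; apply Rinv_0_lt_compat; lra]).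
      assert (Hq1 : 0 <= q + 1 * (s / h) <= 1) by (unfold inSq in Hsq; lra).
      rewrite (K_left h f F M P) by auto.
      rewrite Rabs_R0. assert (0 <= hp * CFc Mb) by nra. lra.
    + replace (s + - h * (1 - q)) with (s - h * (1 - q)) by ring. replace (q + 1 * (1 - q)) with 1 by ring.
      rewrite (K_top h f F M P) by auto. rewrite Rabs_mult, Rabs_right by lra.
      assert (Rabs (F (s - h * (1 - q)) 1) <= CFc Mb) by (apply HFb; unfold inT1; lra). nra.
  - apply cont_rel_char; auto. intros t Ht. apply char_in; auto; lra.
  - intros V HV t Ht Hp1 _. destruct (char_lt s q h t Hsq ltac:(lra) Ht) as [L1 L2].
    unfold inSq in Hsq. assert (Hht : 0 <= h * t) by nra. split.
    + apply (is_derive_ext (fun t => Kf M P (s - h * t) (q + t))). { intros u; f_equal; ring. }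
      apply (K_back_deriv h f fs fq F M P); auto; try lra. apply diag_neq; auto; lra.
    + rewrite Rabs_Ropp, Rabs_mult, (Rabs_right h) by lra.
      assert (HV0 : 0 <= V * exp (2 * (hp * Mb) * (1 - (q + t)))) by (eapply Rabs_le_0; apply (HV 0 (q + t)); unfold inSq; lra).
      assert (Hr := row_bound f (Kf M P) Mb (V * exp (2 * (hp * Mb) * (1 - (q + t)))) (s - h * t) (q + t)
        ltac:(lra) ltac:(apply (ex_RInt_fK h f F M P); auto; lra)
        ltac:(intros r Hr; apply Hfb; unfold inT1; lra) ltac:(lra)
        ltac:(intros r Hr; apply HV; unfold inSq; lra)).
      replace (1 - (q + t)) with (1 - q - t) in Hr, HV0 by ring.
      assert (0 <= Rabs (RInt (fun r => f (s - h * t) r * Kf M P r (q + t)) (s - h * t) 1)) by apply Rabs_pos.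
      assert (h * Rabs (RInt (fun r => f (s - h * t) r * Kf M P r (q + t)) (s - h * t) 1) <=
              hp * (Mb * (V * exp (2 * (hp * Mb) * (1 - q - t))))) by (apply Rmult_le_compat; lra).
      lra.
Qed.

Definition CKLc (Mb hp : R) := Mb * CKc Mb hp + hp * (Mb * (CFc Mb + 1)).

Lemma K_lin h f fs fq F M P Mb hp : setup h f fs fq F M P Mb -> 0 < h <= hp ->
  forall s q, inSq s q -> Rabs (Kf M P s q) <= CKLc Mb hp * s.
Proof.
  intros HS Hh s q Hsq.
  assert (HFb := F_bound h f fs fq F M P Mb HS).
  assert (HFl := F_lin h f fs fq F M P Mb HS).
  assert (HKb := K_bound h f fs fq F M P Mb hp HS Hh).
  assert (HCF : 0 <= CFc Mb) by (eapply Rabs_le_0; apply (HFb 0 0); unfold inT1; lra).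
  assert (HCK : 0 <= CKc Mb hp) by (eapply Rabs_le_0; apply (HKb 0 0); unfold inSq; lra).
  destruct HS as [HC [HN [HK HMb]]].
  assert (Hfb := f_bounds f fs fq Mb HC HN). assert (HC' := HC). destruct HC' as [Hfc _].
  assert (HKc := K_cont h f F M P HK).
  set (T := Rmin (s / h) (1 - q)).
  destruct (char_T s q h Hsq ltac:(lra)) as [HT1 HT2]. fold T in HT1, HT2.
  assert (Hcmp := cmp1 (fun t => Kf M P (s + - h * t) (q + 1 * t))
     (fun t => - (h * RInt (fun r => f (s - h * t) r * Kf M P r (q + t)) (s - h * t) 1))
     (fun t => h * Mb * CKc Mb hp * t) (fun _ => h * Mb * CKc Mb hp) 0 T ((s - q) / (1 + h)) ltac:(lra)).
  specialize (Hcmp ltac:(apply cont_rel_char; auto; intros t Ht; apply char_in; auto; lra)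
                   ltac:(intros t; apply lin_derive)).
  assert (Hd : forall t, 0 < t < T -> t <> (s - q) / (1 + h) ->
     is_derive (fun t => Kf M P (s + - h * t) (q + 1 * t)) t
       (- (h * RInt (fun r => f (s - h * t) r * Kf M P r (q + t)) (s - h * t) 1)) /\
     Rabs (- (h * RInt (fun r => f (s - h * t) r * Kf M P r (q + t)) (s - h * t) 1)) <= h * Mb * CKc Mb hp).
  { intros t Ht Hp1. destruct (char_lt s q h t Hsq ltac:(lra) Ht) as [L1 L2].
    unfold inSq in Hsq. assert (Hht : 0 <= h * t) by nra. split.
    + apply (is_derive_ext (fun t => Kf M P (s - h * t) (q + t))). { intros u; f_equal; ring. }
      apply (K_back_deriv h f fs fq F M P); auto; try lra. apply diag_neq; auto; lra.
    + rewrite Rabs_Ropp, Rabs_mult, (Rabs_right h) by lra.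
      assert (Hr := row_bound f (Kf M P) Mb (CKc Mb hp) (s - h * t) (q + t)
        ltac:(lra) ltac:(apply (ex_RInt_fK h f F M P); auto; lra)
        ltac:(intros r Hr; apply Hfb; unfold inT1; lra) ltac:(lra)
        ltac:(intros r Hr; apply HKb; unfold inSq; lra)).
      assert (0 <= Rabs (RInt (fun r => f (s - h * t) r * Kf M P r (q + t)) (s - h * t) 1)) by apply Rabs_pos.
      assert (h * Rabs (RInt (fun r => f (s - h * t) r * Kf M P r (q + t)) (s - h * t) 1) <= h * (Mb * CKc Mb hp))
        by (apply Rmult_le_compat_l; lra). lra. }
  specialize (Hcmp Hd). cbv beta in Hcmp.
  replace (s + - h * 0) with s in Hcmp by ring. replace (q + 1 * 0) with q in Hcmp by ring.
  assert (HhT : h * T <= s).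
  { assert (h * T <= h * (s / h)) by (apply Rmult_le_compat_l; lra). replace (h * (s / h)) with s in H by (field; lra). auto. }
  assert (HgT : Rabs (Kf M P (s + - h * T) (q + 1 * T)) <= hp * (Mb * (CFc Mb + 1)) * s).
  { unfold inSq in Hsq. destruct (char_end s q h Hsq ltac:(lra)) as [[E1 [E2 E3]]|[E1 [E2 E3]]]; fold T in E1; rewrite E1.
    + replace (s + - h * (s / h)) with (s - h * (s / h)) by ring. rewrite E2.
      assert (0 <= s/h) by (apply Rmult_le_pos; [lra| left; apply Rinv_0_lt_compat; lra]).
      rewrite (K_left h f F M P) by (auto; lra). rewrite Rabs_R0. assert (0 <= hp * (Mb * (CFc Mb + 1))) by (apply Rmult_le_pos; [lra| apply Rmult_le_pos; lra]). apply Rmult_le_pos; lra.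
    + replace (s + - h * (1 - q)) with (s - h * (1 - q)) by ring. replace (q + 1 * (1 - q)) with 1 by ring.
      rewrite (K_top h f F M P) by auto. rewrite Rabs_mult, (Rabs_right h) by lra.
      assert (X := HFl (s - h * (1 - q)) 1 ltac:(unfold inT1; lra)).
      assert (0 <= h * (1 - q)) by nra.
      assert (Mb * (CFc Mb + 1) * (s - h * (1 - q)) <= Mb * (CFc Mb + 1) * s) by (apply Rmult_le_compat_l; nra; lra).
      assert (0 <= Rabs (F (s - h * (1 - q)) 1)) by apply Rabs_pos.
      assert (h * Rabs (F (s - h * (1 - q)) 1) <= hp * (Mb * (CFc Mb + 1) * s)) by (apply Rmult_le_compat; lra).
      lra. }
  unfold CKLc.
  replace (Kf M P s q) with (Kf M P (s + - h * T) (q + 1 * T) - (Kf M P (s + - h * T) (q + 1 * T) - Kf M P s q)) by ring.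
  eapply Rle_trans. apply Rabs_triang. rewrite Rabs_Ropp.
  assert (h * Mb * CKc Mb hp * T - h * Mb * CKc Mb hp * 0 <= Mb * CKc Mb hp * s).
  { replace (h * Mb * CKc Mb hp * T - h * Mb * CKc Mb hp * 0) with (Mb * CKc Mb hp * (h * T)) by ring.
    apply Rmult_le_compat_l; [nra|lra]. }
  lra.
Qed.


Lemma I_diff (f1 f1s f1q f2 K1 K2 : R -> R -> R) Mb CK Df W a1 a2 q :
  C1_T1 f1 f1s f1q -> C1_norm_T1 f1 f1s f1q <= Mb ->
  0 <= a1 <= 1 -> 0 <= a2 <= 1 -> 0 <= CK -> 0 <= Df ->
  ex_RInt (fun r => f1 a1 r * K1 r q) a1 1 -> ex_RInt (fun r => f2 a2 r * K2 r q) a2 1 ->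
  (forall s r, inT1 s r -> Rabs (f2 s r) <= Mb) ->
  (forall s r, inT1 s r -> Rabs (f1 s r - f2 s r) <= Df) ->
  (forall r, 0 <= r <= 1 -> Rabs (K1 r q - K2 r q) <= W) ->
  (forall r, 0 <= r <= 1 -> Rabs (K1 r q) <= CK) ->
  (forall r, 0 <= r <= 1 -> Rabs (K2 r q) <= CK) ->
  Rabs (RInt (fun r => f1 a1 r * K1 r q) a1 1 - RInt (fun r => f2 a2 r * K2 r q) a2 1)
    <= Mb * W + 3 * Mb * CK * Rabs (a1 - a2) + Df * CK.
Proof.
  intros HC HN Ha1 Ha2 HCK HDf E1 E2 Hf2 Hdf HW HK1 HK2.
  assert (Hf1 := f_bounds f1 f1s f1q Mb HC HN).
  assert (HMb : 0 <= Mb) by (eapply Rabs_le_0; apply (Hf1 0 0); unfold inT1; lra).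
  assert (HW0 : 0 <= W) by (eapply Rabs_le_0; apply (HW 0); lra).
  set (m := Rmax a1 a2).
  assert (Hm1 := Rmax_l a1 a2). assert (Hm2 := Rmax_r a1 a2). fold m in Hm1, Hm2.
  assert (Hm3 : m <= 1) by (unfold m; apply Rmax_lub; lra).
  assert (Hma : (m - a1) + (m - a2) = Rabs (a1 - a2)).
  { unfold m, Rmax. destruct Rle_dec; unfold Rabs; destruct Rcase_abs; lra. }
  assert (E11 := ex_RInt_sub1 _ a1 m 1 ltac:(lra) E1). assert (E12 := ex_RInt_sub2 _ a1 m 1 ltac:(lra) E1).
  assert (E21 := ex_RInt_sub1 _ a2 m 1 ltac:(lra) E2). assert (E22 := ex_RInt_sub2 _ a2 m 1 ltac:(lra) E2).
  rewrite <- (RInt_Chasles' _ a1 m 1) by auto. rewrite <- (RInt_Chasles' _ a2 m 1) by auto.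
  replace (RInt (fun r => f1 a1 r * K1 r q) a1 m + RInt (fun r => f1 a1 r * K1 r q) m 1 -
           (RInt (fun r => f2 a2 r * K2 r q) a2 m + RInt (fun r => f2 a2 r * K2 r q) m 1))
    with (RInt (fun r => f1 a1 r * K1 r q - f2 a2 r * K2 r q) m 1 + RInt (fun r => f1 a1 r * K1 r q) a1 m
          - RInt (fun r => f2 a2 r * K2 r q) a2 m) by (rewrite RInt_minus'; auto; ring).
  assert (J1 : Rabs (RInt (fun r => f1 a1 r * K1 r q) a1 m) <= (m - a1) * (Mb * CK)).
  { apply abs_RInt_le_open; [lra|nra|auto|]. intros t Ht. rewrite Rabs_mult.
    apply Rmult_le_compat; auto using Rabs_pos. apply Hf1; unfold inT1; lra. apply HK1; lra. }
  assert (J2 : Rabs (RInt (fun r => f2 a2 r * K2 r q) a2 m) <= (m - a2) * (Mb * CK)).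
  { apply abs_RInt_le_open; [lra|nra|auto|]. intros t Ht. rewrite Rabs_mult.
    apply Rmult_le_compat; auto using Rabs_pos. apply Hf2; unfold inT1; lra. apply HK2; lra. }
  assert (J3 : Rabs (RInt (fun r => f1 a1 r * K1 r q - f2 a2 r * K2 r q) m 1)
               <= (1 - m) * (Mb * W + Mb * Rabs (a1 - a2) * CK + Df * CK)).
  { apply abs_RInt_le_open; [lra| |apply ex_RInt_minus'; auto|].
    { assert (0 <= Mb * Rabs (a1 - a2) * CK) by (apply Rmult_le_pos; [apply Rmult_le_pos|]; auto using Rabs_pos).
      nra. }
    intros t Ht.
    replace (f1 a1 t * K1 t q - f2 a2 t * K2 t q) with
      (f1 a1 t * (K1 t q - K2 t q) + (f1 a1 t - f1 a2 t) * K2 t q + (f1 a2 t - f2 a2 t) * K2 t q) by ring.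
    eapply Rle_trans. apply Rabs_triang. eapply Rle_trans. apply Rplus_le_compat_r. apply Rabs_triang.
    rewrite !Rabs_mult.
    assert (Rabs (f1 a1 t) * Rabs (K1 t q - K2 t q) <= Mb * W).
    { apply Rmult_le_compat; auto using Rabs_pos. apply Hf1; unfold inT1; lra. apply HW; lra. }
    assert (Rabs (f1 a1 t - f1 a2 t) * Rabs (K2 t q) <= Mb * Rabs (a1 - a2) * CK).
    { apply Rmult_le_compat; auto using Rabs_pos. 
      apply (f_lip_s f1 f1s f1q Mb a2 a1 t); auto; unfold inT1; lra. apply HK2; lra. }
    assert (Rabs (f1 a2 t - f2 a2 t) * Rabs (K2 t q) <= Df * CK).
    { apply Rmult_le_compat; auto using Rabs_pos. apply Hdf; unfold inT1; lra. apply HK2; lra. }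
    lra. }
  unfold Rminus at 1. eapply Rle_trans. apply Rabs_triang. rewrite Rabs_Ropp.
  eapply Rle_trans. apply Rplus_le_compat_r. apply Rabs_triang.
  assert (0 <= Mb * W + Mb * Rabs (a1 - a2) * CK + Df * CK).
  { assert (0 <= Mb * Rabs (a1 - a2) * CK) by (apply Rmult_le_pos; [apply Rmult_le_pos|]; auto using Rabs_pos). nra. }
  assert ((1 - m) * (Mb * W + Mb * Rabs (a1 - a2) * CK + Df * CK) <= Mb * W + Mb * Rabs (a1 - a2) * CK + Df * CK).
  { assert (0 <= m) by lra. nra. }
  assert ((m - a1) * (Mb * CK) + (m - a2) * (Mb * CK) = Rabs (a1 - a2) * (Mb * CK)) by (rewrite <- Hma; ring).
  set (A1 := Rabs (RInt (fun r : R => f1 a1 r * K1 r q - f2 a2 r * K2 r q) m 1)) in *.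
  set (A2 := Rabs (RInt (fun r : R => f1 a1 r * K1 r q) a1 m)) in *.
  set (A3 := Rabs (RInt (fun r : R => f2 a2 r * K2 r q) a2 m)) in *.
  set (X := Mb * W + Mb * Rabs (a1 - a2) * CK + Df * CK) in *.
  assert (A2 + A3 <= Rabs (a1 - a2) * (Mb * CK)) by lra.
  assert (X + Rabs (a1 - a2) * (Mb * CK) <= Mb * W + 3 * Mb * CK * Rabs (a1 - a2) + Df * CK).
  { unfold X. assert (0 <= Mb * CK * Rabs (a1 - a2)) by (apply Rmult_le_pos; [nra|apply Rabs_pos]). nra. }
  lra.
Qed.

Definition B0c (Mb hm hp : R) := CFc Mb + hp * (2 * (CFc Mb + 1) * exp (2 * Mb)) + hp * CLc Mb + CKLc Mb hp / hm.
Definition E0c (Mb hp : R) := CKc Mb hp * (Mb * (1 + 3 * hp) + hp).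

Lemma consts_pos Mb hm hp : 0 < Mb -> 0 < hm -> hm <= hp ->
  0 < CFc Mb /\ 0 < CLc Mb /\ 0 < CKc Mb hp /\ 0 < CKLc Mb hp /\ 0 < B0c Mb hm hp /\ 0 < E0c Mb hp.
Proof.
  intros HMb Hhm Hhp. assert (He := exp_pos (2 * Mb)). assert (He2 := exp_pos (2 * (hp * Mb))).
  assert (H1 : 0 < CFc Mb) by (unfold CFc; apply Rmult_lt_0_compat; lra).
  assert (H2 : 0 < CLc Mb) by (unfold CLc; apply Rmult_lt_0_compat; [apply Rmult_lt_0_compat|]; lra).
  assert (H3 : 0 < CKc Mb hp) by (unfold CKc; apply Rmult_lt_0_compat; [|lra]; assert (0 < hp * CFc Mb) by (apply Rmult_lt_0_compat; lra); lra).
  assert (H4 : 0 < CKLc Mb hp) by (unfold CKLc; assert (0 < Mb * CKc Mb hp) by (apply Rmult_lt_0_compat; lra);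
     assert (0 < hp * (Mb * (CFc Mb + 1))) by (apply Rmult_lt_0_compat; [lra|apply Rmult_lt_0_compat; lra]); lra).
  repeat split; auto.
  - unfold B0c. assert (0 < CKLc Mb hp / hm) by (apply Rdiv_lt_0_compat; lra).
    assert (0 < hp * (2 * (CFc Mb + 1) * exp (2 * Mb))) by (apply Rmult_lt_0_compat; [lra|apply Rmult_lt_0_compat; lra]).
    assert (0 < hp * CLc Mb) by (apply Rmult_lt_0_compat; lra). lra.
  - unfold E0c. apply Rmult_lt_0_compat; auto. assert (0 < Mb * (1 + 3 * hp)) by (apply Rmult_lt_0_compat; lra). lra.
Qed.

Lemma Rmin_glb_le a b c x : x <= a -> x <= b -> x <= c -> x <= Rmin (Rmin a b) c.
Proof. intros; repeat apply Rmin_glb; auto. Qed.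

Lemma T_le s q h1 h2 : Rmin (Rmin (s / h1) (s / h2)) (1 - q) <= Rmin (s / h1) (1 - q) /\
                       Rmin (Rmin (s / h1) (s / h2)) (1 - q) <= Rmin (s / h2) (1 - q).
Proof.
  split; apply Rmin_glb; try apply Rmin_r; eapply Rle_trans; try apply Rmin_l; try apply Rmin_l; apply Rmin_r.
Qed.

Lemma left_exit hm hp ha fa fas faq Fa Ma Pa hb fb fbs fbq Fb Mb0 Pb Mb s q :
  setup ha fa fas faq Fa Ma Pa Mb -> setup hb fb fbs fbq Fb Mb0 Pb Mb ->
  0 < hm -> hm <= hb <= ha -> ha <= hp -> inSq s q -> s / ha < 1 - q ->
  Rabs (Kf Ma Pa (s + - ha * (s / ha)) (q + 1 * (s / ha)) - Kf Mb0 Pb (s + - hb * (s / ha)) (q + 1 * (s / ha)))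
    <= CKLc Mb hp / hm * Rabs (ha - hb).
Proof.
  intros HSa HSb Hhm Hh Hhp Hsq Hlt. unfold inSq in Hsq.
  assert (Hs0 : 0 <= s / ha) by (apply Rmult_le_pos; [lra|left; apply Rinv_0_lt_compat; lra]).
  replace (s + - ha * (s / ha)) with 0 by (field; lra).
  rewrite (K_left ha fa Fa Ma Pa) by (try apply HSa; lra). rewrite Rminus_0_l, Rabs_Ropp.
  set (sig := s + - hb * (s / ha)).
  assert (Hsig : sig * ha = s * (ha - hb)) by (unfold sig; field; lra).
  assert (Hsig0 : 0 <= sig) by (assert (0 <= s * (ha - hb)) by nra; nra).
  assert (Hsig1 : sig <= 1) by (assert (s * (ha - hb) <= ha) by nra; nra).
  assert (HKl := K_lin hb fb fbs fbq Fb Mb0 Pb Mb hp HSb ltac:(lra) sig (q + 1 * (s / ha)) ltac:(unfold inSq; lra)).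
  eapply Rle_trans; [exact HKl|].
  assert (HMb : 0 < Mb) by apply HSa.
  destruct (consts_pos Mb hm hp HMb Hhm ltac:(lra)) as [_ [_ [_ [CKL0 _]]]].
  rewrite Rabs_right by lra.
  assert (sig * hm <= ha - hb) by nra.
  assert (sig <= (ha - hb) / hm) by (apply (Rmult_le_reg_r hm); [lra|]; unfold Rdiv; rewrite Rmult_assoc, Rinv_l; lra).
  unfold Rdiv in *. rewrite Rmult_assoc. apply Rmult_le_compat_l; lra.
Qed.

Lemma K_end hm hp h1 f1 f1s f1q F1 M1 P1 h2 f2 f2s f2q F2 M2 P2 Mb Df s q :
  setup h1 f1 f1s f1q F1 M1 P1 Mb -> setup h2 f2 f2s f2q F2 M2 P2 Mb ->
  0 < hm -> hm <= h1 <= hp -> hm <= h2 <= hp -> 0 <= Df ->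
  (forall s q, inT1 s q -> Rabs (f1 s q - f2 s q) <= Df) -> inSq s q ->
  let T := Rmin (Rmin (s / h1) (s / h2)) (1 - q) in
  Rabs (Kf M1 P1 (s + - h1 * T) (q + 1 * T) - Kf M2 P2 (s + - h2 * T) (q + 1 * T))
    <= B0c Mb hm hp * Rmax (Rabs (h1 - h2)) Df.
Proof.
  intros HS1 HS2 Hhm Hh1 Hh2 HDf Hdf Hsq T.
  assert (HTdef : T = Rmin (Rmin (s / h1) (s / h2)) (1 - q)) by reflexivity. clearbody T.
  assert (HMb : 0 < Mb) by apply HS1.
  destruct (consts_pos Mb hm hp HMb Hhm ltac:(lra)) as [CF0 [CL0 [CK0 [CKL0 [B00 E00]]]]].
  set (dh := Rabs (h1 - h2)). set (D := Rmax dh Df).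
  assert (Hdh : dh <= D) by apply Rmax_l. assert (HDfD : Df <= D) by apply Rmax_r.
  assert (Hdh0 : 0 <= dh) by apply Rabs_pos.
  assert (HK1 := HS1). destruct HK1 as [_ [_ [HK1 _]]]. assert (HK2 := HS2). destruct HK2 as [_ [_ [HK2 _]]].
  unfold inSq in Hsq.
  assert (Hs1 : 0 <= s / h1) by (apply Rmult_le_pos; [lra|left; apply Rinv_0_lt_compat; lra]).
  assert (Hs2 : 0 <= s / h2) by (apply Rmult_le_pos; [lra|left; apply Rinv_0_lt_compat; lra]).
  unfold B0c.
  assert (Pp1 : 0 <= hp * (2 * (CFc Mb + 1) * exp (2 * Mb))) by (assert (0 < exp (2*Mb)) by apply exp_pos; apply Rmult_le_pos; [lra|apply Rmult_le_pos; lra]).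
  assert (Pp2 : 0 <= hp * CLc Mb) by (apply Rmult_le_pos; lra).
  assert (Pp3 : 0 <= CKLc Mb hp / hm) by (apply Rmult_le_pos; [lra|left; apply Rinv_0_lt_compat; lra]).
  assert (Hcase : (1 - q <= s / h1 /\ 1 - q <= s / h2) \/ (s / h1 < 1 - q \/ s / h2 < 1 - q)).
  { destruct (Rle_dec (1 - q) (s / h1)); destruct (Rle_dec (1 - q) (s / h2)); [left; auto| right; right; lra | right; left; lra | right; left; lra]. }
  destruct Hcase as [[C1 C2]|Cn].
  - (* both reach the top *)
    assert (HT : T = 1 - q) by (rewrite HTdef; rewrite Rmin_right; auto; apply Rmin_glb; auto). rewrite HT.
    set (s1 := s - h1 * (1 - q)). set (s2 := s - h2 * (1 - q)).
    assert (Hs1r : 0 <= s1 <= 1).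
    { unfold s1. assert (h1 * (1 - q) <= h1 * (s / h1)) by (apply Rmult_le_compat_l; lra).
      replace (h1 * (s / h1)) with s in H by (field; lra). assert (0 <= h1 * (1 - q)) by nra. lra. }
    assert (Hs2r : 0 <= s2 <= 1).
    { unfold s2. assert (h2 * (1 - q) <= h2 * (s / h2)) by (apply Rmult_le_compat_l; lra).
      replace (h2 * (s / h2)) with s in H by (field; lra). assert (0 <= h2 * (1 - q)) by nra. lra. }
    replace (s + - h1 * (1 - q)) with s1 by (unfold s1; ring). replace (s + - h2 * (1 - q)) with s2 by (unfold s2; ring).
    replace (q + 1 * (1 - q)) with 1 by ring.
    rewrite (K_top h1 f1 F1 M1 P1), (K_top h2 f2 F2 M2 P2) by auto.
    assert (HF1 : Rabs (F1 s1 1) <= CFc Mb) by (apply (F_bound h1 f1 f1s f1q F1 M1 P1 Mb HS1); unfold inT1; lra).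
    assert (HFd : Rabs (F1 s1 1 - F2 s1 1) <= Dfc Df Mb) by (apply (F_diff h1 f1 f1s f1q F1 M1 P1 h2 f2 f2s f2q F2 M2 P2 Mb Df); auto; unfold inT1; lra).
    assert (HFl : Rabs (F2 s1 1 - F2 s2 1) <= CLc Mb * dh).
    { destruct (Req_dec q 1) as [Eq|Nq].
      - unfold s1, s2. rewrite Eq. replace (1 - 1) with 0 by ring. rewrite !Rmult_0_r, Rminus_diag, Rabs_R0.
        apply Rmult_le_pos; lra.
      - assert (0 < h1 * (1 - q)) by (apply Rmult_lt_0_compat; lra).
        assert (0 < h2 * (1 - q)) by (apply Rmult_lt_0_compat; lra).
        assert (Hs12 : Rabs (s1 - s2) <= dh).
        { unfold s1, s2, dh. replace (s - h1 * (1 - q) - (s - h2 * (1 - q))) with ((h2 - h1) * (1 - q)) by ring.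
          rewrite Rabs_mult, (Rabs_right (1 - q)) by lra. rewrite <- Rabs_Ropp, Ropp_minus_distr.
          assert (0 <= Rabs (h1 - h2)) by apply Rabs_pos. nra. }
        destruct (Rle_dec s1 s2).
        + rewrite <- Rabs_Ropp, Ropp_minus_distr.
          eapply Rle_trans. apply (F_lip_top h2 f2 f2s f2q F2 M2 P2 Mb s1 s2 HS2); unfold s1, s2 in *; lra.
          apply Rmult_le_compat_l; [lra|]. rewrite Rabs_left1 in Hs12 by lra. lra.
        + eapply Rle_trans. apply (F_lip_top h2 f2 f2s f2q F2 M2 P2 Mb s2 s1 HS2); unfold s1, s2 in *; lra.
          apply Rmult_le_compat_l; [lra|]. rewrite Rabs_right in Hs12 by lra. lra. }
    replace (h1 * F1 s1 1 - h2 * F2 s2 1) with ((h1 - h2) * F1 s1 1 + h2 * (F1 s1 1 - F2 s1 1) + h2 * (F2 s1 1 - F2 s2 1)) by ring.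
    eapply Rle_trans. apply Rabs_triang. eapply Rle_trans. apply Rplus_le_compat_r. apply Rabs_triang.
    rewrite !Rabs_mult, (Rabs_right h2) by lra. fold dh.
    assert (X1 : dh * Rabs (F1 s1 1) <= dh * CFc Mb) by (apply Rmult_le_compat_l; lra).
    assert (X2 : h2 * Rabs (F1 s1 1 - F2 s1 1) <= hp * Dfc Df Mb).
    { apply Rmult_le_compat; try lra; apply Rabs_pos. }
    assert (X3 : h2 * Rabs (F2 s1 1 - F2 s2 1) <= hp * (CLc Mb * dh)).
    { apply Rmult_le_compat; try lra; apply Rabs_pos. }
    unfold Dfc in X2.
    assert (Y1 : dh * CFc Mb <= CFc Mb * D) by nra.
    assert (Y2 : hp * (2 * (Df * (CFc Mb + 1)) * exp (2 * Mb)) <= hp * (2 * (CFc Mb + 1) * exp (2 * Mb)) * D).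
    { replace (hp * (2 * (Df * (CFc Mb + 1)) * exp (2 * Mb))) with (hp * (2 * (CFc Mb + 1) * exp (2 * Mb)) * Df) by ring.
      apply Rmult_le_compat_l; lra. }
    assert (Y3 : hp * (CLc Mb * dh) <= hp * CLc Mb * D) by (rewrite <- Rmult_assoc; apply Rmult_le_compat_l; lra).
    assert (Y4 : 0 <= CKLc Mb hp / hm * D) by (apply Rmult_le_pos; lra).
    fold D. nra.
  - assert (Y : 0 <= B0c Mb hm hp - CKLc Mb hp / hm) by (unfold B0c; lra).
    assert (Y2 : CKLc Mb hp / hm * dh <= B0c Mb hm hp * D).
    { unfold B0c. assert (0 <= D) by lra. assert (CKLc Mb hp / hm * dh <= CKLc Mb hp / hm * D) by (apply Rmult_le_compat_l; lra).
      assert (0 <= (CFc Mb + hp * (2 * (CFc Mb + 1) * exp (2 * Mb)) + hp * CLc Mb) * D) by (apply Rmult_le_pos; lra).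
      nra. }
    eapply Rle_trans; [|exact Y2].
    destruct (Rle_dec h2 h1) as [Hh|Hh].
    + assert (Hss : s / h1 <= s / h2).
      { unfold Rdiv. apply Rmult_le_compat_l; [lra|]. apply Rinv_le_contravar; lra. }
      assert (Hlt : s / h1 < 1 - q) by (destruct Cn; lra).
      assert (HT : T = s / h1) by (rewrite HTdef; rewrite Rmin_left; [apply Rmin_left|]; try lra; rewrite Rmin_left; lra).
      rewrite HT. apply (left_exit hm hp h1 f1 f1s f1q F1 M1 P1 h2 f2 f2s f2q F2 M2 P2 Mb s q); auto; try lra; try (unfold inSq; lra).
    + assert (Hss : s / h2 <= s / h1).
      { unfold Rdiv. apply Rmult_le_compat_l; [lra|]. apply Rinv_le_contravar; lra. }
      assert (Hlt : s / h2 < 1 - q) by (destruct Cn; lra).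
      assert (HT : T = s / h2) by (rewrite HTdef; rewrite Rmin_left; [apply Rmin_right|]; try lra; rewrite Rmin_right; lra).
      rewrite HT. rewrite Rabs_minus_sym. unfold dh. rewrite (Rabs_minus_sym h1 h2).
      apply (left_exit hm hp h2 f2 f2s f2q F2 M2 P2 h1 f1 f1s f1q F1 M1 P1 Mb s q); auto; try lra; try (unfold inSq; lra).
Qed.

Lemma K_diff hm hp h1 f1 f1s f1q F1 M1 P1 h2 f2 f2s f2q F2 M2 P2 Mb Df :
  setup h1 f1 f1s f1q F1 M1 P1 Mb -> setup h2 f2 f2s f2q F2 M2 P2 Mb ->
  0 < hm -> hm <= h1 <= hp -> hm <= h2 <= hp -> 0 <= Df ->
  (forall s q, inT1 s q -> Rabs (f1 s q - f2 s q) <= Df) ->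
  forall s q, inSq s q -> Rabs (Kf M1 P1 s q - Kf M2 P2 s q) <=
    2 * (B0c Mb hm hp * Rmax (Rabs (h1 - h2)) Df + E0c Mb hp * Rmax (Rabs (h1 - h2)) Df) * exp (2 * (hp * Mb)).
Proof.
  intros HS1 HS2 Hhm Hh1 Hh2 HDf Hdf.
  assert (HMb : 0 < Mb) by apply HS1.
  destruct (consts_pos Mb hm hp HMb Hhm ltac:(lra)) as [CF0 [CL0 [CK0 [CKL0 [B00 E00]]]]].
  set (dh := Rabs (h1 - h2)). set (D := Rmax dh Df).
  assert (Hdh : dh <= D) by apply Rmax_l. assert (HDfD : Df <= D) by apply Rmax_r.
  assert (Hdh0 : 0 <= dh) by apply Rabs_pos.
  assert (HK1b := K_bound h1 f1 f1s f1q F1 M1 P1 Mb hp HS1 ltac:(lra)).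
  assert (HK2b := K_bound h2 f2 f2s f2q F2 M2 P2 Mb hp HS2 ltac:(lra)).
  assert (HS1' := HS1). destruct HS1' as [HC1 [HN1 [HK1 _]]].
  assert (HS2' := HS2). destruct HS2' as [HC2 [HN2 [HK2 _]]].
  assert (Hf1b := f_bounds f1 f1s f1q Mb HC1 HN1). assert (Hf1c : cont_on inT1 f1) by apply HC1.
  assert (Hf2b := f_bounds f2 f2s f2q Mb HC2 HN2). assert (Hf2c : cont_on inT1 f2) by apply HC2.
  assert (HK1c := K_cont h1 f1 F1 M1 P1 HK1). assert (HK2c := K_cont h2 f2 F2 M2 P2 HK2).
  apply (GKgen (fun s q => Kf M1 P1 s q - Kf M2 P2 s q)); [nra|apply Rmult_le_pos; lra|apply Rmult_le_pos; lra| |].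
  { apply Sq_bounded. apply cont_on_minus; auto. }
  intros s q Hsq.
  set (T := Rmin (Rmin (s / h1) (s / h2)) (1 - q)).
  assert (HTe := K_end hm hp h1 f1 f1s f1q F1 M1 P1 h2 f2 f2s f2q F2 M2 P2 Mb Df s q HS1 HS2 Hhm Hh1 Hh2 HDf Hdf Hsq).
  simpl in HTe. fold T in HTe.
  destruct (T_le s q h1 h2) as [HT1 HT2]. fold T in HT1, HT2.
  destruct (char_T s q h1 Hsq ltac:(lra)) as [HT1' _]. destruct (char_T s q h2 Hsq ltac:(lra)) as [HT2' _].
  assert (HT0 : 0 <= T) by (unfold T; apply Rmin_glb; [apply Rmin_glb|]; unfold inSq in Hsq;
     try (apply Rmult_le_pos; [lra|left; apply Rinv_0_lt_compat; lra]); lra).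
  set (I1 := fun t => RInt (fun r => f1 (s - h1 * t) r * Kf M1 P1 r (q + t)) (s - h1 * t) 1).
  set (I2 := fun t => RInt (fun r => f2 (s - h2 * t) r * Kf M2 P2 r (q + t)) (s - h2 * t) 1).
  exists (fun t => Kf M1 P1 (s + - h1 * t) (q + 1 * t) - Kf M2 P2 (s + - h2 * t) (q + 1 * t)).
  exists (fun t => - (h1 * I1 t) - - (h2 * I2 t)).
  exists T, ((s - q) / (1 + h1)), ((s - q) / (1 + h2)).
  split; [split; [auto| lra]|]. split; [f_equal; f_equal; ring|]. split; [exact HTe|]. split.
  { apply cont_rel_minus; apply cont_rel_char; auto; intros t Ht; apply char_in; auto; lra. }
  intros V HV t Ht Hp1 Hp2.
  destruct (char_lt s q h1 t Hsq ltac:(lra) ltac:(lra)) as [L1 L2].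
  destruct (char_lt s q h2 t Hsq ltac:(lra) ltac:(lra)) as [L3 _].
  unfold inSq in Hsq. assert (Hht1 : 0 <= h1 * t) by nra. assert (Hht2 : 0 <= h2 * t) by nra.
  split.
  { apply (is_derive_minus (fun t => Kf M1 P1 (s + - h1 * t) (q + 1 * t)) (fun t => Kf M2 P2 (s + - h2 * t) (q + 1 * t))).
    - apply (is_derive_ext (fun t => Kf M1 P1 (s - h1 * t) (q + t))). { intros u; f_equal; ring. }
      apply (K_back_deriv h1 f1 f1s f1q F1 M1 P1); auto; try lra. apply diag_neq; auto; lra.
    - apply (is_derive_ext (fun t => Kf M2 P2 (s - h2 * t) (q + t))). { intros u; f_equal; ring. }
      apply (K_back_deriv h2 f2 f2s f2q F2 M2 P2); auto; try lra. apply diag_neq; auto; lra. }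
  set (W := V * exp (2 * (hp * Mb) * (1 - (q + t)))).
  assert (HW : forall r, 0 <= r <= 1 -> Rabs (Kf M1 P1 r (q + t) - Kf M2 P2 r (q + t)) <= W).
  { intros r Hr. apply (HV r (q + t)). unfold inSq; lra. }
  assert (HW0 : 0 <= W) by (eapply Rabs_le_0; apply (HW 0); lra).
  assert (E1 : ex_RInt (fun r => f1 (s - h1 * t) r * Kf M1 P1 r (q + t)) (s - h1 * t) 1)
    by (apply (ex_RInt_fK h1 f1 F1 M1 P1); auto; lra).
  assert (E2 : ex_RInt (fun r => f2 (s - h2 * t) r * Kf M2 P2 r (q + t)) (s - h2 * t) 1)
    by (apply (ex_RInt_fK h2 f2 F2 M2 P2); auto; lra).
  assert (HI1 : Rabs (I1 t) <= Mb * CKc Mb hp).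
  { unfold I1. apply row_bound; auto; try lra. intros r Hr; apply Hf1b; unfold inT1; lra.
    intros r Hr; apply HK1b; unfold inSq; lra. }
  assert (HId : Rabs (I1 t - I2 t) <= Mb * W + 3 * Mb * CKc Mb hp * Rabs ((s - h1 * t) - (s - h2 * t)) + Df * CKc Mb hp).
  { unfold I1, I2. apply (I_diff f1 f1s f1q f2 (Kf M1 P1) (Kf M2 P2) Mb (CKc Mb hp) Df W); auto; try lra.
    - intros a b Hab; apply Hf2b; auto.
    - intros r Hr; apply HK1b; unfold inSq; lra.
    - intros r Hr; apply HK2b; unfold inSq; lra. }
  assert (Hs12 : Rabs ((s - h1 * t) - (s - h2 * t)) <= dh).
  { replace ((s - h1 * t) - (s - h2 * t)) with ((h2 - h1) * t) by ring. rewrite Rabs_mult, (Rabs_right t) by lra.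
    rewrite Rabs_minus_sym. fold dh. assert (t <= 1) by lra. nra. }
  clearbody I1 I2. cbv beta.
  set (i1 := I1 t) in *. set (i2 := I2 t) in *.
  replace (- (h1 * i1) - - (h2 * i2)) with (- ((h1 - h2) * i1 + h2 * (i1 - i2))) by ring.
  rewrite Rabs_Ropp. eapply Rle_trans. apply Rabs_triang. rewrite !Rabs_mult, (Rabs_right h2) by lra. fold dh.
  assert (X1 : dh * Rabs i1 <= dh * (Mb * CKc Mb hp)) by (apply Rmult_le_compat_l; lra).
  assert (X2 : h2 * Rabs (i1 - i2) <= hp * (Mb * W + 3 * Mb * CKc Mb hp * dh + Df * CKc Mb hp)).
  { apply Rmult_le_compat; try lra. apply Rabs_pos. eapply Rle_trans; [exact HId|].
    assert (3 * Mb * CKc Mb hp * Rabs (s - h1 * t - (s - h2 * t)) <= 3 * Mb * CKc Mb hp * dh)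
      by (apply Rmult_le_compat_l; [nra|lra]). lra. }
  replace (1 - q - t) with (1 - (q + t)) by ring. fold W.
  unfold E0c.
  assert (Z1 : dh * (Mb * CKc Mb hp) <= D * (Mb * CKc Mb hp)) by (apply Rmult_le_compat_r; nra).
  assert (Z2 : hp * (3 * Mb * CKc Mb hp * dh) <= hp * (3 * Mb * CKc Mb hp * D)) by (apply Rmult_le_compat_l; [lra|]; apply Rmult_le_compat_l; nra).
  assert (Z3 : hp * (Df * CKc Mb hp) <= hp * (D * CKc Mb hp)) by (apply Rmult_le_compat_l; [lra|]; apply Rmult_le_compat_r; nra).
  replace (hp * Mb * V * exp (2 * (hp * Mb) * (1 - (q + t)))) with (hp * (Mb * W)) by (unfold W; ring).
  clearbody W D dh. lra.
Qed.


Theorem lemma2 :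
  forall (hm hp Mb : R), 0 < hm -> hm <= hp -> 0 < Mb ->
  exists LQ1 LQ2 : R, 0 < LQ1 /\ 0 < LQ2 /\
  forall (h1 h2 : R) (f1 f1s f1q f2 f2s f2q : R -> R -> R)
         (F1 M1 P1 F2 M2 P2 : R -> R -> R),
    hm <= h1 <= hp -> hm <= h2 <= hp ->
    C1_T1 f1 f1s f1q -> C1_T1 f2 f2s f2q ->
    C1_norm_T1 f1 f1s f1q <= Mb -> C1_norm_T1 f2 f2s f2q <= Mb ->
    kernel_sol h1 f1 F1 M1 P1 -> kernel_sol h2 f2 F2 M2 P2 ->
    sup_01 (fun s => gain_Q1 h1 M1 s - gain_Q1 h2 M2 s)
      <= LQ1 * Rmax (Rabs (h1 - h2)) (sup_T1 (fun s q => f1 s q - f2 s q)) /\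
    sup_01 (fun s => gain_Q2 M1 s - gain_Q2 M2 s)
      <= LQ2 * Rmax (Rabs (h1 - h2)) (sup_T1 (fun s q => f1 s q - f2 s q)).
Proof.
  intros hm hp Mb Hhm Hhp HMb.
  destruct (consts_pos Mb hm hp HMb Hhm Hhp) as [CF0 [CL0 [CK0 [CKL0 [B00 E00]]]]].
  set (L2 := 2 * (B0c Mb hm hp + E0c Mb hp) * exp (2 * (hp * Mb))).
  assert (HL2 : 0 < L2) by (unfold L2; assert (0 < exp (2 * (hp * Mb))) by apply exp_pos; apply Rmult_lt_0_compat; lra).
  exists (L2 / hm + CKc Mb hp / (hm * hm)), L2.
  split; [assert (0 < L2 / hm) by (apply Rdiv_lt_0_compat; lra);
          assert (0 < CKc Mb hp / (hm * hm)) by (apply Rdiv_lt_0_compat; nra); lra|].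
  split; [auto|].
  intros h1 h2 f1 f1s f1q f2 f2s f2q F1 M1 P1 F2 M2 P2 Hh1 Hh2 HC1 HC2 HN1 HN2 HK1 HK2.
  assert (HS1 : setup h1 f1 f1s f1q F1 M1 P1 Mb) by exact (conj HC1 (conj HN1 (conj HK1 HMb))).
  assert (HS2 : setup h2 f2 f2s f2q F2 M2 P2 Mb) by exact (conj HC2 (conj HN2 (conj HK2 HMb))).
  set (Df := sup_T1 (fun s q => f1 s q - f2 s q)).
  assert (Hf1b := f_bounds f1 f1s f1q Mb HC1 HN1). assert (Hf2b := f_bounds f2 f2s f2q Mb HC2 HN2).
  assert (Hbd : exists B, forall s q, inT1 s q -> Rabs (f1 s q - f2 s q) <= B).
  { exists (2 * Mb). intros s q Hsq. unfold Rminus. eapply Rle_trans. apply Rabs_triang. rewrite Rabs_Ropp.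
    destruct (Hf1b s q Hsq) as [A1 _]. destruct (Hf2b s q Hsq) as [A2 _]. lra. }
  assert (Hdf : forall s q, inT1 s q -> Rabs (f1 s q - f2 s q) <= Df).
  { intros s q Hsq. apply (sup_T1_ge (fun s q => f1 s q - f2 s q)); auto. }
  assert (HDf : 0 <= Df) by (eapply Rabs_le_0; apply (Hdf 0 0); unfold inT1; lra).
  set (D := Rmax (Rabs (h1 - h2)) Df).
  assert (Hdh : Rabs (h1 - h2) <= D) by apply Rmax_l.
  assert (HKd := K_diff hm hp h1 f1 f1s f1q F1 M1 P1 h2 f2 f2s f2q F2 M2 P2 Mb Df HS1 HS2 Hhm Hh1 Hh2 HDf Hdf).
  fold D in HKd.
  assert (HKd' : forall s q, inSq s q -> Rabs (Kf M1 P1 s q - Kf M2 P2 s q) <= L2 * D).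
  { intros s q Hsq. eapply Rle_trans. apply HKd; auto. unfold L2. right. ring. }
  assert (HK2b := K_bound h2 f2 f2s f2q F2 M2 P2 Mb hp HS2 ltac:(lra)).
  split.
  - apply sup_01_le. intros s Hs. unfold gain_Q1.
    rewrite <- (K_M h1 f1 F1 M1 P1 s 0 HK1) by (unfold inT3; lra).
    rewrite <- (K_M h2 f2 F2 M2 P2 s 0 HK2) by (unfold inT3; lra).
    assert (A1 := HKd' s 0 ltac:(unfold inSq; lra)).
    assert (A2 := HK2b s 0 ltac:(unfold inSq; lra)).
    set (k1 := Kf M1 P1 s 0) in *. set (k2 := Kf M2 P2 s 0) in *.
    replace (- (1 / h1) * k1 - - (1 / h2) * k2) with (- ((1 / h1) * (k1 - k2) + (h2 - h1) / (h1 * h2) * k2)) by (field; lra).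
    rewrite Rabs_Ropp. eapply Rle_trans. apply Rabs_triang. rewrite !Rabs_mult.
    rewrite (Rabs_right (1 / h1)) by (left; apply Rdiv_lt_0_compat; lra).
    rewrite Rabs_div by nra. rewrite (Rabs_right (h1 * h2)) by nra. rewrite (Rabs_minus_sym h2 h1).
    assert (B1 : 1 / h1 * Rabs (k1 - k2) <= 1 / hm * (L2 * D)).
    { apply Rmult_le_compat; auto. left; apply Rdiv_lt_0_compat; lra. apply Rabs_pos.
      unfold Rdiv. rewrite !Rmult_1_l. apply Rinv_le_contravar; lra. }
    assert (B2 : Rabs (h1 - h2) / (h1 * h2) * Rabs k2 <= D / (hm * hm) * CKc Mb hp).
    { apply Rmult_le_compat; auto. apply Rmult_le_pos; [apply Rabs_pos| left; apply Rinv_0_lt_compat; nra]. apply Rabs_pos.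
      unfold Rdiv. apply Rmult_le_compat; auto. apply Rabs_pos. left; apply Rinv_0_lt_compat; nra.
      apply Rinv_le_contravar; [nra|]. apply Rmult_le_compat; lra. }
    replace ((L2 / hm + CKc Mb hp / (hm * hm)) * D) with (1 / hm * (L2 * D) + D / (hm * hm) * CKc Mb hp) by (field; lra).
    lra.
  - apply sup_01_le. intros s Hs. unfold gain_Q2.
    rewrite <- (K_M h1 f1 F1 M1 P1 1 (1 - s) HK1) by (unfold inT3; lra).
    rewrite <- (K_M h2 f2 F2 M2 P2 1 (1 - s) HK2) by (unfold inT3; lra).
    replace (- Kf M1 P1 1 (1 - s) - - Kf M2 P2 1 (1 - s)) with (- (Kf M1 P1 1 (1 - s) - Kf M2 P2 1 (1 - s))) by ring.
    rewrite Rabs_Ropp. apply HKd'. unfold inSq; lra.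
Qed.
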